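(* Assume the setting below, on the A-mesh $S_{1/\varepsilon}$ (i.e. $\lambda=\varepsilon^{-1}$) with mesh parameter $a\ge2$. Let $\mu=\varepsilon^{a-2}\min\{\varepsilon^2,N^{-2}\}$. There exist $N_0$ and $C$, both independent of $\varepsilon$, such that for all $N\ge N_0$, \[ |\tau_i[v]|\le C\begin{cases} (\ln\varepsilon)^2N^{-2}e^{-\beta x_i/\varepsilon}, & 1\le i\le J-1,\\ \mu N, & i=J,\\ \mu, & J+1\le i\le N-1.\end{cases} \]
   Context: Let $0<\varepsilon<1$. Let $b,c,f\in C^4[0,1]$, and let $\beta$ be a constant with $b(x)>\beta>0$ and $c(x)\ge0$ on $[0,1]$. Let $u$ be the solution of $-\varepsilon u''-bu'+cu=f$ on $(0,1)$ with $u(0)=u(1)=0$. Define $v(x)=-\frac{\varepsilon u'(0)}{b(0)}e^{-b(0)x/\varepsilon}$. Mesh $S_\lambda$, $\lambda\in\{N,\varepsilon^{-1}\}$. $N$ is a positive integer. $Q\in(0,1)$ is a fixed rational with $J=QN$ an integer, and $a>0$. Set $\xi=(a\varepsilon/\beta)\ln\lambda$, assumed $\le Q$, and $h=\xi/J$, $H=(1-\xi)/(N-J)$. The mesh points are $x_i=ih$ ($0\le i\le J$) and $x_i=\xi+(i-J)H$ ($J\le i\le N$). Write $h_i=x_i-x_{i-1}$ and $\hbar_i=(h_i+h_{i+1})/2$. Define $D^+g(x_i)=(g(x_{i+1})-g(x_i))/h_{i+1}$, $D^-g(x_i)=(g(x_i)-g(x_{i-1}))/h_i$, $D''g(x_i)=(D^+g(x_i)-D^-g(x_i))/\hbar_i$.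 Let $\sigma(\rho)=2\rho/(e^{2\rho}-1)$ for $\rho>0$, $\sigma(0)=1$, and $\rho_i=b(x_i)h_{i+1}/(2\varepsilon)$. The truncation error of the ASI scheme is $\tau_i[g]=-\varepsilon\sigma(\rho_i)D''g(x_i)-b(x_i)D^+g(x_i)+\varepsilon g''(x_i)+b(x_i)g'(x_i)$ for $1\le i\le N-1$. *)

(* Defs.v *)
From Stdlib Require Import Reals Lra Lia.
From Coquelicot Require Import Coquelicot.
Open Scope R_scope.

Definition C4_01 (g : R -> R) : Prop :=
  exists delta : R, 0 < delta /\
    forall x : R, - delta < x < 1 + delta ->
      (forall k : nat, (k <= 4)%nat -> ex_derive_n g k x) /\
      continuous (Derive_n g 4) x.

Definition is_bvp_solution (eps : R) (b c f u : R -> R) : Prop :=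
  (exists delta : R, 0 < delta /\
     forall x : R, - delta < x < 1 + delta ->
       ex_derive u x /\ ex_derive_n u 2 x) /\
  (forall x : R, 0 < x < 1 ->
     - eps * Derive_n u 2 x - b x * Derive u x + c x * u x = f x) /\
  u 0 = 0 /\ u 1 = 0.

Definition vlayer (eps : R) (b u : R -> R) (x : R) : R :=
  - (eps * Derive u 0 / b 0) * exp (- b 0 * x / eps).

Definition xi_mesh (eps a beta lambda : R) : R := a * eps / beta * ln lambda.

Definition mesh (eps a beta lambda : R) (N J : nat) (i : nat) : R :=
  let xi := xi_mesh eps a beta lambda in
  let h := xi / INR J in
  let H := (1 - xi) / (INR N - INR J) in
  if (i <=? J)%nat then INR i * h else xi + (INR i - INR J) * H.

Section Scheme.
Variables (eps a beta lambda : R) (N J : nat).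
Let x (i : nat) : R := mesh eps a beta lambda N J i.

Definition hstep (i : nat) : R := x i - x (i - 1).
Definition hbar (i : nat) : R := (hstep i + hstep (S i)) / 2.

Definition Dplus (g : R -> R) (i : nat) : R := (g (x (S i)) - g (x i)) / hstep (S i).
Definition Dminus (g : R -> R) (i : nat) : R := (g (x i) - g (x (i - 1))) / hstep i.
Definition Dsecond (g : R -> R) (i : nat) : R := (Dplus g i - Dminus g i) / hbar i.

Definition sigma (rho : R) : R :=
  if Rlt_dec 0 rho then 2 * rho / (exp (2 * rho) - 1) else 1.

Definition rho (b : R -> R) (i : nat) : R := b (x i) * hstep (S i) / (2 * eps).

Definition tau (b g : R -> R) (i : nat) : R :=
  - eps * sigma (rho b i) * Dsecond g i - b (x i) * Dplus g i
  + eps * Derive_n g 2 (x i) + b (x i) * Derive g (x i).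
End Scheme.

(* Main.v *)
Require Import Defs.
From Stdlib Require Import Reals Lra Lia.
From Coquelicot Require Import Coquelicot.
Open Scope R_scope.


Lemma deriv_cont f x l : is_derive f x l -> continuity_pt f x.
Proof.
  intros H. apply continuity_pt_filterlim.
  apply (ex_derive_continuous f x). exists l. exact H.
Qed.

Lemma incr (f df : R -> R) a :
  (forall x, a <= x -> is_derive f x (df x)) ->
  (forall x, a <= x -> 0 <= df x) -> forall y, a <= y -> f a <= f y.
Proof.
  intros Hd Hp y Hy.
  destruct (Req_dec a y) as [<-|Hne]; [lra|].
  destruct (MVT_gen f a y df) as [c [Hc Heq]].
  - intros x Hx. apply Hd. unfold Rmin, Rmax in Hx. destruct (Rle_dec a y); lra.
  - intros x Hx. apply (deriv_cont _ _ (df x)). apply Hd.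
    unfold Rmin, Rmax in Hx. destruct (Rle_dec a y); lra.
  - assert (0 <= df c). { apply Hp. unfold Rmin, Rmax in Hc. destruct (Rle_dec a y); lra. }
    assert (0 <= df c * (y - a)) by (apply Rmult_le_pos; lra). lra.
Qed.

Lemma X1 t : 1 + t <= exp t.
Proof. destruct (Req_dec t 0) as [->|H]. rewrite exp_0; lra. left; apply exp_ineq1; auto. Qed.

Lemma exp_pos' t : 0 < exp t. Proof. apply exp_pos. Qed.

Lemma X2 t : 0 <= t -> 1 + t + t^2/2 <= exp t.
Proof.
  intros Ht.
  assert (H := incr (fun t => exp t - 1 - t - t^2/2) (fun t => exp t - 1 - t) 0).
  simpl in H. rewrite exp_0 in H.
  enough (0 <= exp t - 1 - t - t * (t * 1) / 2) by (simpl; lra).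
  replace 0 with (1 - 1 - 0 - 0 * (0 * 1) / 2) by field.
  apply H; auto.
  - intros x _. auto_derive; auto. field.
  - intros x _. pose proof (X1 x). lra.
Qed.

Lemma X3a t : 0 <= t -> exp t <= 1 + t + t^2 * exp t / 2.
Proof.
  intros Ht.
  assert (H := incr (fun t => 1 + t + t^2 * exp t / 2 - exp t) (fun t => 1 - exp t * (1 - t - t^2/2)) 0).
  simpl in H. rewrite exp_0 in H.
  enough (0 <= 1 + t + t * (t*1) * exp t / 2 - exp t) by (simpl; lra).
  replace 0 with (1 + 0 + 0 * (0 * 1) * 1 / 2 - 1) by field.
  apply H; auto.
  - intros x _. auto_derive; auto. field.
  - intros x Hx. pose proof (X1 (-x)).
    assert (exp x * exp (-x) = 1) by (rewrite <- exp_plus; replace (x + - x) with 0 by ring; apply exp_0).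
    assert (1 - x - x^2/2 <= exp (-x)) by nra.
    pose proof (exp_pos x). nra.
Qed.

Lemma X3 t : 0 <= t -> exp t <= 1 + t + t^2/2 + t^3 * exp t / 6.
Proof.
  intros Ht.
  assert (H := incr (fun t => 1 + t + t^2/2 + t^3 * exp t / 6 - exp t)
     (fun t => 1 + t + (t^2/2 + t^3/6) * exp t - exp t) 0).
  simpl in H. rewrite exp_0 in H.
  enough (0 <= 1 + t + t * (t*1) / 2 + t*(t * (t*1)) * exp t / 6 - exp t) by (simpl; lra).
  replace 0 with (1 + 0 + 0 * (0 * 1) / 2 + 0*(0*(0*1)) * 1 / 6 - 1) by field.
  apply H; auto.
  - intros x _. auto_derive; auto. field.
  - intros x Hx. pose proof (X3a x Hx). pose proof (exp_pos x).
    assert (0 <= x^3/6 * exp x) by (apply Rmult_le_pos; [|lra]; apply Rmult_le_pos; [apply pow_le|]; lra).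
    nra.
Qed.

Lemma X4 t : 0 <= t -> exp (-t) <= 1 - t + t^2/2.
Proof.
  intros Ht.
  assert (H := incr (fun t => 1 - t + t^2/2 - exp (-t)) (fun t => -1 + t + exp (-t)) 0).
  simpl in H. rewrite Ropp_0, exp_0 in H.
  enough (0 <= 1 - t + t * (t*1) / 2 - exp (-t)) by (simpl; lra).
  replace 0 with (1 - 0 + 0 * (0 * 1) / 2 - 1) by field.
  apply H; auto.
  - intros x _. auto_derive; auto. field.
  - intros x _. pose proof (X1 (-x)). lra.
Qed.

Lemma X5 t : 0 <= t -> 1 - t + t^2/2 - t^3/6 <= exp (-t).
Proof.
  intros Ht.
  assert (H := incr (fun t => exp (-t) - (1 - t + t^2/2 - t^3/6)) (fun t => - exp (-t) + 1 - t + t^2/2) 0).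
  simpl in H. rewrite Ropp_0, exp_0 in H.
  enough (0 <= exp (-t) - (1 - t + t * (t*1) / 2 - t*(t*(t*1))/6)) by (simpl; lra).
  replace 0 with (1 - (1 - 0 + 0 * (0 * 1) / 2 - 0*(0*(0*1))/6)) by field.
  apply H; auto.
  - intros x _. auto_derive; auto. field.
  - intros x Hx. pose proof (X4 x Hx). lra.
Qed.

Lemma Xsinh t : 0 <= t -> 2 * t <= exp t - exp (-t).
Proof.
  intros Ht.
  assert (H := incr (fun t => exp t - exp (-t) - 2 * t) (fun t => exp t + exp (-t) - 2) 0).
  simpl in H. rewrite Ropp_0, exp_0 in H.
  enough (0 <= exp t - exp (-t) - 2 * t) by lra.
  replace 0 with (1 - 1 - 2 * 0) by field.
  apply H; auto.
  - intros x _. auto_derive; auto. field.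
  - intros x _. pose proof (X1 x). pose proof (X1 (-x)). lra.
Qed.

Definition Nf (y : R) := y * exp y + y - 2 * exp y + 2.

Lemma Nf_bounds y : 0 <= y -> 0 <= Nf y <= y^3 * exp y / 6.
Proof.
  intros Hy. unfold Nf. split.
  - assert (H := incr (fun t => t * exp t + t - 2 * exp t + 2) (fun t => 1 + (t - 1) * exp t) 0).
    simpl in H. rewrite exp_0 in H.
    replace 0 with (0 * 1 + 0 - 2 * 1 + 2) by field.
    apply H; auto.
    + intros x _. auto_derive; auto. field.
    + intros x _. pose proof (X1 (-x)).
      assert (exp x * exp (-x) = 1) by (rewrite <- exp_plus; replace (x + - x) with 0 by ring; apply exp_0).
      pose proof (exp_pos x). nra.
  - assert (H := incr (fun t => t^3 * exp t / 6 - (t * exp t + t - 2 * exp t + 2))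
        (fun t => (t^2/2 + t^3/6) * exp t - 1 - (t - 1) * exp t) 0).
    simpl in H. rewrite exp_0 in H.
    enough (0 <= y * (y * (y * 1)) * exp y / 6 - (y * exp y + y - 2 * exp y + 2)) by (simpl; lra).
    replace 0 with (0 * (0 * (0 * 1)) * 1 / 6 - (0 * 1 + 0 - 2 * 1 + 2)) by field.
    apply H; auto.
    + intros x _. auto_derive; auto. field.
    + intros x Hx. pose proof (X4 x Hx).
      assert (exp x * exp (-x) = 1) by (rewrite <- exp_plus; replace (x + - x) with 0 by ring; apply exp_0).
      pose proof (exp_pos x).
      assert (0 <= x^3/6) by (apply Rmult_le_pos; [apply pow_le|]; lra).
      assert (1 <= (1 - x + x^2/2 + x^3/6) * exp x) by nra.
      nra.
Qed.

Lemma exp_le_inv_le x y : x <= y -> exp x <= exp y.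
Proof. intros [H|H]; [left; apply exp_increasing; auto|subst; lra]. Qed.


Lemma mvt_bound f f' a b M :
  (forall c, Rmin a b <= c <= Rmax a b -> is_derive f c (f' c)) ->
  (forall c, Rmin a b <= c <= Rmax a b -> Rabs (f' c) <= M) ->
  Rabs (f b - f a) <= M * Rabs (b - a).
Proof.
  intros Hd HM.
  destruct (MVT_gen f a b f') as [c [Hc Heq]].
  - intros x Hx. apply Hd. lra.
  - intros x Hx. apply (deriv_cont _ _ (f' x)). apply Hd. lra.
  - rewrite Heq, Rabs_mult. apply Rmult_le_compat_r. apply Rabs_pos. apply HM; auto.
Qed.

Lemma expm1_pos y : 0 < y -> 0 < exp y - 1.
Proof. intros. pose proof (X1 y). lra. Qed.

Lemma le_divR a n d : 0 < d -> a * d <= n -> a <= n / d.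
Proof. intros Hd H. apply Rmult_le_reg_r with d; auto. replace (n / d * d) with n by (field; lra). auto. Qed.
Lemma divR_le n d a : 0 < d -> n <= a * d -> n / d <= a.
Proof. intros Hd H. apply Rmult_le_reg_r with d; auto. replace (n / d * d) with n by (field; lra). auto. Qed.

Definition B (y : R) := y / (exp y - 1).
Definition dB (y : R) := (exp y - 1 - y * exp y) / (exp y - 1)^2.
Definition d2B (y : R) := exp y * Nf y / (exp y - 1)^3.

Lemma exp_inv y : exp y * exp (-y) = 1.
Proof. rewrite <- exp_plus. replace (y + - y) with 0 by ring. apply exp_0. Qed.

Lemma B_bounds y : 0 < y -> 0 < B y <= 1 /\ B y <= (1 + y) * exp (-y).
Proof.
  intros Hy. unfold B. pose proof (expm1_pos y Hy). pose proof (X1 y).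
  pose proof (exp_inv y). pose proof (exp_pos y). pose proof (exp_pos (-y)).
  split; [split|].
  - apply Rdiv_lt_0_compat; lra.
  - apply divR_le; auto. lra.
  - apply divR_le; auto. nra.
Qed.

Lemma B_deriv y : 0 < y -> is_derive B y (dB y).
Proof.
  intros Hy. pose proof (expm1_pos y Hy). unfold B, dB.
  auto_derive. lra. field. lra.
Qed.

Lemma dB_deriv y : 0 < y -> is_derive dB y (d2B y).
Proof.
  intros Hy. pose proof (expm1_pos y Hy). unfold dB, d2B, Nf.
  auto_derive. assert (exp y + - (1) <> 0) by lra. apply Rmult_integral_contrapositive; split; [lra|]. rewrite Rmult_1_r; lra. field. lra.
Qed.

Lemma dB_bounds y : 0 < y -> -1/2 <= dB y <= 0.
Proof.
  intros Hy. pose proof (expm1_pos y Hy). unfold dB.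
  pose proof (exp_inv y). pose proof (exp_pos y). pose proof (exp_pos (-y)).
  pose proof (X1 (-y)). pose proof (Xsinh y (Rlt_le _ _ Hy)).
  assert (Hp : 0 < (exp y - 1)^2) by (apply pow_lt; lra).
  split.
  - apply le_divR; auto.
    assert (2 * y * exp y <= (exp y - exp (-y)) * exp y) by (apply Rmult_le_compat_r; lra).
    assert ((exp y - exp (-y)) * exp y = exp y * exp y - 1) by nra.
    simpl. nra.
  - apply divR_le; auto. nra.
Qed.

Lemma d2B_bounds y : 0 < y -> 0 <= d2B y <= (1 + y)^3 * exp (-y) / 6.
Proof.
  intros Hy. pose proof (expm1_pos y Hy).
  destruct (Nf_bounds y (Rlt_le _ _ Hy)) as [N0 N1].
  destruct (B_bounds y Hy) as [[B0 B1] B2].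
  pose proof (exp_inv y). pose proof (exp_pos y). pose proof (exp_pos (-y)).
  assert (Hp : 0 < (exp y - 1)^3) by (apply pow_lt; lra).
  unfold d2B. split.
  - apply Rdiv_le_0_compat; auto. apply Rmult_le_pos; lra.
  - assert (exp y * Nf y / (exp y - 1)^3 <= exp y * exp y * B y ^ 3 / 6).
    { apply divR_le; auto.
      assert (HB3 : B y ^ 3 * (exp y - 1)^3 = y^3) by (unfold B; field; lra).
      replace (exp y * exp y * B y ^ 3 / 6 * (exp y - 1) ^ 3) with (exp y * (y^3 * exp y / 6))
        by (rewrite <- HB3; field).
      apply Rmult_le_compat_l; lra. }
    assert (B y ^3 <= ((1 + y) * exp (-y))^3) by (apply pow_incr; lra).
    assert (exp y * exp y * ((1 + y) * exp (-y))^3 = (1+y)^3 * exp (-y)).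
    { replace (exp y * exp y * ((1 + y) * exp (-y))^3) with ((1+y)^3 * exp (-y) * (exp y * exp (-y))^2) by ring.
      rewrite exp_inv. ring. }
    assert (0 <= exp y * exp y) by nra.
    nra.
Qed.

Lemma B_rem S A : 0 < S -> 0 < A ->
  Rabs (B S - B A - dB A * (S - A)) <= (S - A)^2 * ((1 + Rmax S A)^3 * exp (- Rmin S A) / 6).
Proof.
  intros HS HA.
  set (M2 := (1 + Rmax S A)^3 * exp (- Rmin S A) / 6).
  assert (HM2 : forall d, Rmin S A <= d <= Rmax S A -> Rabs (d2B d) <= M2).
  { intros d Hd. assert (0 < d) by (unfold Rmin in Hd; destruct (Rle_dec S A); lra).
    destruct (d2B_bounds d H) as [H1 H2]. rewrite Rabs_pos_eq by auto.
    apply Rle_trans with (1 := H2). unfold M2. unfold Rdiv. apply Rmult_le_compat_r; [lra|].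
    apply Rmult_le_compat.
    - apply pow_le; lra.
    - left; apply exp_pos.
    - apply pow_incr; lra.
    - destruct (Req_dec d (Rmin S A)) as [->|]; [lra|]. left; apply exp_increasing; lra. }
  assert (Hg := mvt_bound (fun s => B s - dB A * s) (fun s => dB s - dB A) A S (M2 * Rabs (S - A))).
  replace (B S - B A - dB A * (S - A)) with ((B S - dB A * S) - (B A - dB A * A)) by ring.
  replace ((S - A)^2 * M2) with (M2 * Rabs (S - A) * Rabs (S - A)).
  2:{ rewrite Rmult_assoc, <- Rabs_mult, Rabs_pos_eq. ring. apply (Rle_0_sqr (S - A)). }
  apply Hg.
  - intros c Hc. assert (0 < c) by (unfold Rmin in Hc; destruct (Rle_dec A S); lra).
    assert (H1 : is_derive (fun s => dB A * s) c (dB A)).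
    { set (k := dB A). auto_derive; auto. ring. }
    apply (is_derive_minus (fun s => B s) (fun s => dB A * s) c (dB c) (dB A)); auto.
    apply B_deriv; auto.
  - intros c Hc.
    assert (Hcb : Rmin S A <= c <= Rmax S A) by (unfold Rmin, Rmax in *; destruct (Rle_dec A S), (Rle_dec S A); lra).
    apply Rle_trans with (M2 * Rabs (c - A)).
    + apply (mvt_bound dB d2B).
      * intros d Hd. apply dB_deriv. unfold Rmin in Hd, Hcb. destruct (Rle_dec A c), (Rle_dec S A); lra.
      * intros d Hd. apply HM2. unfold Rmin, Rmax in *. destruct (Rle_dec A c), (Rle_dec S A), (Rle_dec c A); lra.
    + apply Rmult_le_compat_l. unfold M2. apply Rmult_le_pos; [|lra]. apply Rmult_le_pos.
      apply pow_le; unfold Rmax; destruct (Rle_dec S A); lra. left; apply exp_pos.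
      unfold Rmin, Rmax in *. destruct (Rle_dec S A), (Rle_dec A S);
      unfold Rabs; destruct (Rcase_abs (c - A)), (Rcase_abs (S - A)); lra.
Qed.


Definition Tn (eps b0 bi p q : R) : R :=
  let k := b0 / eps in let A := k * q in let G := k * p in let S := bi * q / eps in
  - eps * (S / (exp S - 1)) * ((2 / (p + q)) * ((exp (- A) - 1) / q - (1 - exp G) / p))
  - bi * ((exp (- A) - 1) / q) + eps * k ^ 2 - bi * k.

Definition Wf (A : R) := exp A + exp (- A) - 2.

Lemma W_bounds A : 0 <= A -> A^2 - A^3/6 <= Wf A <= A^2 + A^3 * exp A / 6.
Proof.
  intros HA. unfold Wf. pose proof (X2 A HA). pose proof (X3 A HA). pose proof (X4 A HA). pose proof (X5 A HA).
  split; lra.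
Qed.

Lemma Tn_unif eps b0 bi q : 0 < eps -> 0 < b0 -> 0 < bi -> 0 < q ->
  Tn eps b0 bi q q = - (eps / q^2) * Wf (b0 * q / eps)
     * (B (bi * q / eps) - B (b0 * q / eps) - dB (b0 * q / eps) * (bi * q / eps - b0 * q / eps)).
Proof.
  intros He Hb0 Hbi Hq. unfold Tn, Wf, B, dB.
  set (A := b0 / eps * q). replace (b0 * q / eps) with A by (unfold A; field; lra).
  set (S := bi * q / eps).
  assert (HA : 0 < A) by (unfold A; apply Rmult_lt_0_compat; [apply Rdiv_lt_0_compat|]; lra).
  assert (HS : 0 < S) by (unfold S; apply Rdiv_lt_0_compat; [apply Rmult_lt_0_compat|]; lra).
  pose proof (expm1_pos A HA). pose proof (expm1_pos S HS).
  assert (Hinv : exp (- A) = / exp A) by (rewrite exp_Ropp; auto).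
  rewrite Hinv. replace (b0 / eps * q) with A by reflexivity.
  assert (bi = S * eps / q) by (unfold S; field; lra).
  assert (b0 = A * eps / q) by (unfold A; field; lra).
  rewrite H1, H2. replace (b0 / eps) with (A / q) by (rewrite H2; field; lra).
  pose proof (exp_pos A).
  field. repeat split; lra.
Qed.

Lemma unif_bound eps b0 bi q x L bmax :
  0 < eps -> 0 < q <= x -> 0 < b0 <= bmax -> 0 < bi <= bmax -> 0 <= L ->
  Rabs (bi - b0) <= L * x ->
  Rabs (exp (- b0 * x / eps) * Tn eps b0 bi q q) <=
    bmax^2 * L^2 / 6 * (q / eps)^2 * eps * ((x / eps)^2 * (1 + bmax * (x / eps))^4)
      * exp (- (b0 - L * q) * x / eps).
Proof.
  intros He Hq Hb0 Hbi HL Hd.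
  rewrite Tn_unif by lra.
  set (A := b0 * q / eps). set (S := bi * q / eps).
  assert (HA : 0 < A) by (unfold A; apply Rdiv_lt_0_compat; [apply Rmult_lt_0_compat|]; lra).
  assert (HS : 0 < S) by (unfold S; apply Rdiv_lt_0_compat; [apply Rmult_lt_0_compat|]; lra).
  pose proof (B_rem S A HS HA) as HR.
  destruct (W_bounds A (Rlt_le _ _ HA)) as [_ HW].
  pose proof (exp_pos A) as HeA. pose proof (X1 A).
  assert (HW2 : 0 <= Wf A <= A^2 * (1 + A) * exp A).
  { split. pose proof (W_bounds A (Rlt_le _ _ HA)). unfold Wf. pose proof (X1 A). pose proof (X1 (-A)). lra.
    assert (A^2 <= A^2 * exp A) by (pose proof (pow2_ge_0 A); nra).
    assert (A^3 * exp A / 6 <= A^3 * exp A) by (assert (0 <= A^3 * exp A) by (apply Rmult_le_pos; [apply pow_le|]; lra); lra).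
    simpl in *. nra. }
  set (Rm := B S - B A - dB A * (S - A)) in *.
  set (M := Rmax S A). set (m := Rmin S A).
  assert (Hqx : q / eps <= x / eps) by (apply Rmult_le_compat_r; [left; apply Rinv_0_lt_compat|]; lra).
  assert (Hq0 : 0 < q / eps) by (apply Rdiv_lt_0_compat; lra).
  assert (HSr : S = bi * (q / eps)) by (unfold S; field; lra).
  assert (HAr : A = b0 * (q / eps)) by (unfold A; field; lra).
  assert (HMb : M <= bmax * (x / eps)).
  { unfold M, Rmax. destruct (Rle_dec S A).
    - rewrite HAr. apply Rle_trans with (bmax * (q / eps)). apply Rmult_le_compat_r; lra. apply Rmult_le_compat_l; lra.
    - rewrite HSr. apply Rle_trans with (bmax * (q / eps)). apply Rmult_le_compat_r; lra. apply Rmult_le_compat_l; lra. }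
  assert (HAb : A <= bmax * (x / eps)).
  { rewrite HAr. apply Rle_trans with (bmax * (q / eps)). apply Rmult_le_compat_r; lra. apply Rmult_le_compat_l; lra. }
  assert (HSA : Rabs (S - A) <= L * x * (q / eps)).
  { unfold S, A. replace (bi * q / eps - b0 * q / eps) with ((bi - b0) * (q / eps)) by (field; lra).
    rewrite Rabs_mult, (Rabs_pos_eq (q/eps)) by (left; apply Rdiv_lt_0_compat; lra).
    apply Rmult_le_compat_r; [left; apply Rdiv_lt_0_compat; lra| auto]. }
  assert (Hexp : exp A * exp (- m) <= exp (Rabs (S - A))).
  { rewrite <- exp_plus. apply exp_le_inv_le. unfold m, Rmin. unfold Rabs. destruct (Rle_dec S A), (Rcase_abs (S - A)); lra. }
  rewrite Rabs_mult, Rabs_pos_eq by (left; apply exp_pos).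
  rewrite Rabs_mult. rewrite Rabs_mult.
  rewrite (Rabs_left1 (- (eps / q ^ 2))) by (assert (0 < eps / q^2) by (apply Rdiv_lt_0_compat; [|apply pow_lt]; lra); lra).
  rewrite (Rabs_pos_eq (Wf A)) by lra.
  rewrite Ropp_involutive.
  set (E := exp (- b0 * x / eps)).
  assert (HE : 0 < E) by apply exp_pos.
  set (z := x / eps). set (r := q / eps).
  assert (Hz : 0 < z) by (apply Rdiv_lt_0_compat; lra).
  assert (Hr : 0 < r) by (apply Rdiv_lt_0_compat; lra).
  assert (HRm : Rabs Rm <= (S - A)^2 * ((1 + M)^3 * exp (- m) / 6)) by exact HR.
  assert (HSA2 : (S - A)^2 <= (L * x * r)^2).
  { rewrite <- (pow2_abs (S - A)). apply pow_incr. split; [apply Rabs_pos|exact HSA]. }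
  assert (H1M : 0 <= (1 + M)^3 <= (1 + bmax * z)^3).
  { assert (0 <= M) by (unfold M, Rmax; destruct (Rle_dec S A); lra).
    split. apply pow_le; lra. apply pow_incr. split; unfold z; lra. }
  assert (H1A : 0 <= 1 + A <= 1 + bmax * z) by (unfold z; lra).
  assert (HA2 : eps / q^2 * A^2 = b0^2 / eps).
  { unfold A. field. lra. }
  assert (Hx : x = z * eps) by (unfold z; field; lra).
  assert (Hqr : q = r * eps) by (unfold r; field; lra).
  assert (Hexp2 : E * exp (Rabs (S - A)) <= exp (- (b0 - L * q) * x / eps)).
  { unfold E. rewrite <- exp_plus. apply exp_le_inv_le.
    assert (Rabs (S - A) <= L * q * x / eps) by
      (replace (L * q * x / eps) with (L * x * (q / eps)) by (field; lra); unfold r in HSA; exact HSA).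
    replace (- (b0 - L * q) * x / eps) with (- b0 * x / eps + L * q * x / eps) by (field; lra). lra. }
  apply Rle_trans with (E * (eps / q^2 * (A^2 * (1 + A) * exp A) * ((L * x * r)^2 * ((1 + M)^3 * exp (- m) / 6)))).
  { apply Rmult_le_compat_l; [lra|]. apply Rmult_le_compat.
    - apply Rmult_le_pos; [apply Rdiv_le_0_compat; [|apply pow_lt]; lra|lra].
    - apply Rabs_pos.
    - apply Rmult_le_compat_l; [apply Rdiv_le_0_compat; [|apply pow_lt]; lra|lra].
    - apply Rle_trans with (1 := HRm). apply Rmult_le_compat_r; auto.
      apply Rmult_le_pos; [|lra]. apply Rmult_le_pos; [lra|left; apply exp_pos]. }
  replace (E * (eps / q ^ 2 * (A ^ 2 * (1 + A) * exp A) * ((L * x * r) ^ 2 * ((1 + M) ^ 3 * exp (- m) / 6))))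
    with ((eps / q^2 * A^2) * (L * x * r)^2 / 6 * ((1 + A) * (1 + M)^3) * (E * (exp A * exp (- m)))) by (field; lra).
  rewrite HA2.
  assert (HP : (1 + A) * (1 + M)^3 <= (1 + bmax * z)^4).
  { replace ((1 + bmax * z)^4) with ((1 + bmax * z) * (1 + bmax * z)^3) by ring.
    apply Rmult_le_compat; lra. }
  assert (HEE : E * (exp A * exp (- m)) <= exp (- (b0 - L * q) * x / eps)).
  { apply Rle_trans with (E * exp (Rabs (S - A))); auto. apply Rmult_le_compat_l; lra. }
  assert (Hb2 : b0^2 <= bmax^2) by (apply pow_incr; lra).
  assert (0 <= (1 + A) * (1 + M)^3) by (apply Rmult_le_pos; lra).
  assert (0 <= E * (exp A * exp (- m))) by (apply Rmult_le_pos; [lra|]; apply Rmult_le_pos; left; apply exp_pos).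
  replace (bmax ^ 2 * L ^ 2 / 6 * r ^ 2 * eps * (z ^ 2 * (1 + bmax * z) ^ 4) * exp (- (b0 - L * q) * x / eps))
    with ((bmax^2 / eps) * (L * x * r)^2 / 6 * (1 + bmax * z)^4 * exp (- (b0 - L * q) * x / eps))
    by (rewrite Hx; field; lra).
  assert (HP1 : 0 <= b0^2 / eps * (L * x * r)^2 / 6).
  { apply Rmult_le_pos; [|lra]. apply Rmult_le_pos; [|apply pow2_ge_0]. apply Rdiv_le_0_compat; [apply pow2_ge_0|lra]. }
  assert (HPQ : b0^2 / eps * (L * x * r)^2 / 6 <= bmax^2 / eps * (L * x * r)^2 / 6).
  { apply Rmult_le_compat_r; [lra|]. apply Rmult_le_compat_r; [apply pow2_ge_0|].
    apply Rmult_le_compat_r; [left; apply Rinv_0_lt_compat; lra|auto]. }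
  apply Rmult_le_compat; auto.
  - apply Rmult_le_pos; auto.
  - apply Rmult_le_compat; auto.
Qed.


Lemma Tn_split (eps b0 bi p q : R) : 0 < eps -> 0 < p -> 0 < q -> 0 < bi ->
  Tn eps b0 bi p q =
  - eps * B (bi * q / eps) * (2 / (p + q)) * ((exp (b0 / eps * p) - 1) / p - (1 - exp (- (b0 / eps * q))) / q)
  + bi * ((1 - exp (- (b0 / eps * q))) / q) + (b0 / eps) * (b0 - bi).
Proof.
  intros. assert (0 < bi * q / eps) by (apply Rdiv_lt_0_compat; [apply Rmult_lt_0_compat|]; lra).
  pose proof (expm1_pos _ H3). unfold Tn, B. field. repeat split; lra.
Qed.

Lemma JI (eps b0 bi p q bmax : R) : 0 < eps -> 0 < p <= q -> 0 < b0 -> 0 < bi <= bmax ->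
  Rabs (Tn eps b0 bi p q) <= 2 * eps / q^2 + 2 * b0 * exp (b0 * p / eps) / q + bmax / q + b0 / eps * Rabs (bi - b0).
Proof.
  intros He Hp Hb0 Hbi. rewrite Tn_split by lra.
  set (k := b0 / eps). set (G := k * p). set (A := k * q). set (S := bi * q / eps).
  assert (Hk : 0 < k) by (unfold k; apply Rdiv_lt_0_compat; lra).
  assert (HG : 0 < G) by (unfold G; apply Rmult_lt_0_compat; lra).
  assert (HA : 0 < A) by (unfold A; apply Rmult_lt_0_compat; lra).
  assert (HS : 0 < S) by (unfold S; apply Rdiv_lt_0_compat; [apply Rmult_lt_0_compat|]; lra).
  replace (b0 * p / eps) with G by (unfold G, k; field; lra).
  destruct (B_bounds S HS) as [[HB0 HB1] _].
  pose proof (X1 (- A)). pose proof (exp_pos (-A)). pose proof (X1 (-G)). pose proof (exp_inv G). pose proof (exp_pos G).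
  assert (HeA1 : exp (-A) <= 1) by (left; rewrite <- exp_0; apply exp_increasing; lra).
  assert (HeG : exp G - 1 <= G * exp G) by nra.
  assert (HeG0 : 0 <= exp G - 1) by (pose proof (X1 G); lra).
  assert (HY : Rabs ((exp G - 1) / p - (1 - exp (- A)) / q) <= 1 / q + k * exp G).
  { assert (0 <= (exp G - 1) / p <= k * exp G).
    { split. apply Rdiv_le_0_compat; lra. apply divR_le; [lra|]. assert (G * exp G = k * exp G * p) by (unfold G; ring). lra. }
    assert (0 <= (1 - exp (- A)) / q <= 1 / q).
    { split. apply Rdiv_le_0_compat; lra. unfold Rdiv. apply Rmult_le_compat_r. left; apply Rinv_0_lt_compat; lra. lra. }
    unfold Rabs. destruct (Rcase_abs _); lra. }
  assert (H2pq : 0 < 2 / (p + q) <= 2 / q).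
  { split. apply Rdiv_lt_0_compat; lra. unfold Rdiv. apply Rmult_le_compat_l; [lra|].
    apply Rinv_le_contravar; lra. }
  assert (Ht1 : Rabs (- eps * B S * (2 / (p + q)) * ((exp G - 1) / p - (1 - exp (- A)) / q)) <= 2 * eps / q ^ 2 + 2 * b0 * exp G / q).
  { rewrite !Rabs_mult. rewrite Rabs_Ropp, (Rabs_pos_eq eps), (Rabs_pos_eq (B S)), (Rabs_pos_eq (2 / (p+q))) by lra.
    apply Rle_trans with (eps * 1 * (2 / q) * (1 / q + k * exp G)).
    { apply Rmult_le_compat; try lra.
      - apply Rmult_le_pos; [apply Rmult_le_pos|]; lra.
      - apply Rabs_pos.
      - apply Rmult_le_compat; try lra. apply Rmult_le_pos; lra. apply Rmult_le_compat_l; lra. }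
    unfold k. right. field. lra. }
  assert (Ht2 : Rabs (bi * ((1 - exp (- A)) / q)) <= bmax / q).
  { rewrite Rabs_mult, Rabs_pos_eq by lra. rewrite Rabs_pos_eq.
    2:{ apply Rdiv_le_0_compat; lra. }
    apply Rle_trans with (bmax * (1 / q)). apply Rmult_le_compat; try lra. apply Rdiv_le_0_compat; lra.
    unfold Rdiv. apply Rmult_le_compat_r. left; apply Rinv_0_lt_compat; lra. lra.
    right; field; lra. }
  assert (Ht3 : Rabs (k * (b0 - bi)) = b0 / eps * Rabs (bi - b0)).
  { rewrite Rabs_mult, Rabs_pos_eq by lra. rewrite <- Rabs_Ropp. f_equal. f_equal. ring. }
  eapply Rle_trans. apply Rabs_triang. rewrite Ht3.
  eapply Rle_trans. apply Rplus_le_compat_r. apply Rabs_triang. unfold k in *; lra.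
Qed.

Definition phi (G : R) := (exp G - 1) / G.
Definition psi (A : R) := (1 - exp (- A)) / A.

Lemma phi_bounds G : 0 < G -> 0 <= phi G - 1 - G / 2 <= G^2 * exp G / 6.
Proof.
  intros HG. pose proof (X2 G (Rlt_le _ _ HG)). pose proof (X3 G (Rlt_le _ _ HG)).
  replace (phi G - 1 - G / 2) with ((exp G - 1 - G - G^2/2) / G) by (unfold phi; field; lra).
  split. apply Rdiv_le_0_compat; lra. apply divR_le; [lra|]. simpl in *. nra.
Qed.

Lemma psi_bounds A : 0 < A -> 0 <= psi A - 1 + A / 2 <= A^2 / 6 /\ psi A <= 1.
Proof.
  intros HA. pose proof (X4 A (Rlt_le _ _ HA)). pose proof (X5 A (Rlt_le _ _ HA)). pose proof (X1 (-A)).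
  replace (psi A - 1 + A / 2) with ((1 - exp (-A) - A + A^2/2) / A) by (unfold psi; field; lra).
  split; [split|].
  - apply Rdiv_le_0_compat; lra.
  - apply divR_le; [lra|]. simpl in *. nra.
  - unfold psi. apply divR_le; lra.
Qed.

Lemma psiphi A : 0 < A -> Rabs (psi A * phi A - 1) <= A * exp A / 6.
Proof.
  intros HA. destruct (W_bounds A (Rlt_le _ _ HA)) as [W1 W2].
  replace (psi A * phi A - 1) with ((Wf A - A^2) / A^2).
  2:{ unfold psi, phi, Wf. pose proof (exp_inv A). pose proof (exp_pos A).
      assert (exp (-A) = / exp A) by (rewrite exp_Ropp; auto). rewrite H1. field. lra. }
  assert (HA2 : 0 < A^2) by (apply pow_lt; lra).
  pose proof (X1 A).
  apply Rabs_le. split.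
  - apply le_divR; auto. simpl in *. nra.
  - apply divR_le; auto. simpl in *. nra.
Qed.

Lemma B_lip S A : 0 < S -> 0 < A -> Rabs (B S - B A) <= / 2 * Rabs (S - A).
Proof.
  intros HS HA. apply (mvt_bound B dB).
  - intros c Hc. apply B_deriv. unfold Rmin in Hc; destruct (Rle_dec A S); lra.
  - intros c Hc. assert (0 < c) by (unfold Rmin in Hc; destruct (Rle_dec A S); lra).
    pose proof (dB_bounds c H). apply Rabs_le. lra.
Qed.

Lemma JII (eps b0 bi p q Amax : R) : 0 < eps -> 0 < p <= q -> 0 < b0 -> 0 < bi -> b0 * q / eps <= Amax ->
  Rabs (Tn eps b0 bi p q) <= b0^2 * q / eps^2 * (Rabs (bi - b0) * (2 + Amax * exp Amax) + b0 * (exp Amax + 1)).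
Proof.
  intros He Hp Hb0 Hbi HAm. rewrite Tn_split by lra.
  set (k := b0 / eps). set (G := k * p). set (A := k * q). set (S := bi * q / eps).
  assert (Hk : 0 < k) by (unfold k; apply Rdiv_lt_0_compat; lra).
  assert (HG : 0 < G) by (unfold G; apply Rmult_lt_0_compat; lra).
  assert (HA : 0 < A) by (unfold A; apply Rmult_lt_0_compat; lra).
  assert (HS : 0 < S) by (unfold S; apply Rdiv_lt_0_compat; [apply Rmult_lt_0_compat|]; lra).
  assert (HGA : G <= A) by (unfold G, A; apply Rmult_le_compat_l; lra).
  assert (HAm' : A <= Amax) by (unfold A, k; replace (b0 / eps * q) with (b0 * q / eps) by (field; lra); lra).
  set (Y := (exp G - 1) / p - (1 - exp (- A)) / q).
  assert (HYe : Y = k * (phi G - psi A)).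
  { unfold Y, phi, psi, G, A. field. repeat split; lra. }
  assert (HXe : (1 - exp (- A)) / q = k * psi A).
  { unfold psi, A. field. repeat split; lra. }
  destruct (phi_bounds G HG) as [PG1 PG2].
  destruct (phi_bounds A HA) as [PA1 PA2].
  destruct (psi_bounds A HA) as [[PS1 PS2] PS3].
  pose proof (psiphi A HA) as PP.
  assert (HeG : exp G <= exp Amax) by (apply exp_le_inv_le; lra).
  assert (HeA : exp A <= exp Amax) by (apply exp_le_inv_le; lra).
  pose proof (exp_pos G). pose proof (exp_pos A). pose proof (exp_pos Amax).
  assert (HAm0 : 0 <= Amax) by lra.
  set (cY := 1 + Amax * exp Amax).
  assert (HcY : 0 <= cY) by (unfold cY; assert (0 <= Amax * exp Amax) by (apply Rmult_le_pos; lra); lra).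
  assert (Hpp : Rabs (phi G - psi A) <= (G + A) * cY).
  { assert (G^2 * exp G / 6 <= G * (Amax * exp Amax)).
    { assert (G ^ 2 * exp G <= G * (Amax * exp Amax)).
      { replace (G^2 * exp G) with (G * (G * exp G)) by ring. apply Rmult_le_compat_l; [lra|].
        apply Rmult_le_compat; lra. }
      assert (0 <= G^2 * exp G) by (apply Rmult_le_pos; [apply pow2_ge_0|lra]). lra. }
    assert (0 <= G * (Amax * exp Amax)) by (apply Rmult_le_pos; [lra|apply Rmult_le_pos; lra]).
    assert (A * (Amax * exp Amax) >= 0) by (apply Rle_ge, Rmult_le_pos; [lra|apply Rmult_le_pos; lra]).
    apply Rabs_le. unfold cY. split; nra. }
  assert (HY : Rabs Y <= k * ((G + A) * cY)).
  { rewrite HYe, Rabs_mult, (Rabs_pos_eq k) by lra. apply Rmult_le_compat_l; lra. }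
  replace (- eps * B S * (2 / (p + q)) * Y + bi * ((1 - exp (- A)) / q) + k * (b0 - bi))
    with ((- eps * B A * (2 / (p + q)) * Y + b0 * ((1 - exp (- A)) / q))
         + (- eps * (B S - B A) * (2 / (p + q)) * Y + (bi - b0) * ((1 - exp (- A)) / q - k))) by (unfold Y; ring).
  assert (HT1 : Rabs (- eps * (B S - B A) * (2 / (p + q)) * Y + (bi - b0) * ((1 - exp (- A)) / q - k))
                <= Rabs (bi - b0) * k^2 * q * (cY + 1)).
  { eapply Rle_trans. apply Rabs_triang.
    assert (HSA : Rabs (S - A) = Rabs (bi - b0) * (q / eps)).
    { replace (S - A) with ((bi - b0) * (q / eps)) by (unfold S, A, k; field; lra).
      rewrite Rabs_mult, (Rabs_pos_eq (q / eps)); auto. left; apply Rdiv_lt_0_compat; lra. }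
    pose proof (B_lip S A HS HA) as HBL.
    assert (Ha : Rabs (- eps * (B S - B A) * (2 / (p + q)) * Y) <= Rabs (bi - b0) * k^2 * q * cY).
    { rewrite !Rabs_mult, Rabs_Ropp, (Rabs_pos_eq eps), (Rabs_pos_eq (2 / (p + q))) by (try apply Rlt_le, Rdiv_lt_0_compat; lra).
      apply Rle_trans with (eps * (/ 2 * (Rabs (bi - b0) * (q / eps))) * (2 / (p + q)) * (k * ((G + A) * cY))).
      { rewrite <- HSA. apply Rmult_le_compat; try apply Rabs_pos.
        - apply Rmult_le_pos; [apply Rmult_le_pos; [lra|apply Rabs_pos]|]. left; apply Rdiv_lt_0_compat; lra.
        - apply Rmult_le_compat_r; [left; apply Rdiv_lt_0_compat; lra|]. apply Rmult_le_compat_l; lra.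
        - auto. }
      right. unfold G, A. field. lra. }
    assert (Hb : Rabs ((bi - b0) * ((1 - exp (- A)) / q - k)) <= Rabs (bi - b0) * k^2 * q).
    { rewrite Rabs_mult. rewrite HXe.
      replace (k * psi A - k) with (- (k * (1 - psi A))) by ring. rewrite Rabs_Ropp.
      rewrite (Rabs_pos_eq (k * (1 - psi A))) by (apply Rmult_le_pos; lra).
      replace (Rabs (bi - b0) * k ^ 2 * q) with (Rabs (bi - b0) * (k * A)) by (unfold A; ring).
      apply Rmult_le_compat_l; [apply Rabs_pos|]. apply Rmult_le_compat_l; lra. }
    replace (Rabs (bi - b0) * k ^ 2 * q * (cY + 1)) with (Rabs (bi - b0) * k ^ 2 * q * cY + Rabs (bi - b0) * k ^ 2 * q) by ring.
    lra. }
  set (Zp := (G + A) * psi A * phi A - 2 * phi G + 2 * psi A).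
  assert (HT0e : - eps * B A * (2 / (p + q)) * Y + b0 * ((1 - exp (- A)) / q) = b0 * k * Zp / ((G + A) * phi A)).
  { rewrite HYe, HXe. unfold Zp, B, phi, psi, G, A, k. pose proof (expm1_pos _ HA).
    unfold A, k in H2. field. repeat split; try lra. nra. }
  assert (HZ : Rabs Zp <= A^2 * (exp Amax + 1)).
  { replace Zp with ((G + A) * (psi A * phi A - 1) + 2 * (psi A - 1 + A / 2) - 2 * (phi G - 1 - G / 2)) by (unfold Zp; field).
    assert (HZ1 : Rabs ((G + A) * (psi A * phi A - 1)) <= 2 * A * (A * exp Amax / 6)).
    { rewrite Rabs_mult, Rabs_pos_eq by lra. apply Rmult_le_compat; try lra; try apply Rabs_pos.
      apply Rle_trans with (1 := PP). apply Rmult_le_compat_r; [lra|]. apply Rmult_le_compat_l; lra. }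
    assert (H2' : G^2 * exp G / 6 <= A^2 * exp Amax / 6).
    { apply Rmult_le_compat_r; [lra|]. apply Rmult_le_compat; try lra. apply pow2_ge_0. apply pow_incr; lra. }
    assert (0 <= A^2) by apply pow2_ge_0.
    assert (HZ3 : Rabs ((G + A) * (psi A * phi A - 1) + 2 * (psi A - 1 + A / 2) - 2 * (phi G - 1 - G / 2))
       <= Rabs ((G + A) * (psi A * phi A - 1)) + 2 * (A^2/6) + 2 * (A^2 * exp Amax / 6)).
    { unfold Rminus at 1. eapply Rle_trans. apply Rabs_triang. eapply Rle_trans. apply Rplus_le_compat_r. apply Rabs_triang.
      rewrite Rabs_Ropp, !Rabs_mult, (Rabs_pos_eq 2) by lra.
      rewrite (Rabs_pos_eq (psi A - 1 + A / 2)) by lra. rewrite (Rabs_pos_eq (phi G - 1 - G / 2)) by lra. lra. }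
    assert (A * exp Amax <= A * exp Amax) by lra.
    assert (0 <= A^2 * exp Amax) by (apply Rmult_le_pos; lra).
    replace (2 * A * (A * exp Amax / 6)) with (A^2 * exp Amax / 3) in HZ1 by field.
    lra. }
  assert (HT0 : Rabs (- eps * B A * (2 / (p + q)) * Y + b0 * ((1 - exp (- A)) / q)) <= b0 * k^2 * q * (exp Amax + 1)).
  { rewrite HT0e. unfold Rdiv. rewrite Rabs_mult, Rabs_mult, Rabs_Rinv.
    2:{ apply Rgt_not_eq. apply Rmult_lt_0_compat; lra. }
    rewrite (Rabs_pos_eq (b0 * k)) by (apply Rmult_le_pos; lra).
    rewrite (Rabs_pos_eq ((G + A) * phi A)) by (apply Rmult_le_pos; lra).
    apply Rle_trans with (b0 * k * (A^2 * (exp Amax + 1)) * / A).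
    { apply Rmult_le_compat.
      - apply Rmult_le_pos; [apply Rmult_le_pos; lra|apply Rabs_pos].
      - left; apply Rinv_0_lt_compat, Rmult_lt_0_compat; lra.
      - apply Rmult_le_compat_l; [apply Rmult_le_pos; lra| auto].
      - apply Rinv_le_contravar; [lra|]. assert (A * 1 <= (G + A) * phi A) by (apply Rmult_le_compat; lra). lra. }
    right. unfold A. field. split; lra. }
  eapply Rle_trans. apply Rabs_triang.
  replace (b0 ^ 2 * q / eps ^ 2 * (Rabs (bi - b0) * (2 + Amax * exp Amax) + b0 * (exp Amax + 1)))
    with (b0 * k^2 * q * (exp Amax + 1) + Rabs (bi - b0) * k^2 * q * (cY + 1)) by (unfold cY, k; field; lra).
  lra.
Qed.


Lemma minprin (eps : R) (w dw d2w bb cc : R -> R) :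
  0 < eps ->
  (forall x, 0 <= x <= 1 -> is_derive w x (dw x)) ->
  (forall x, 0 < x < 1 -> is_derive dw x (d2w x)) ->
  (forall x, 0 < x < 1 -> 0 <= cc x) ->
  (forall x, 0 < x < 1 -> 0 < - eps * d2w x - bb x * dw x + cc x * w x) ->
  0 <= w 0 -> 0 <= w 1 -> forall x, 0 <= x <= 1 -> 0 <= w x.
Proof.
  intros He Hd Hd2 Hc HL H0 H1 x Hx.
  destruct (Rle_lt_dec 0 (w x)) as [|Hneg]; auto. exfalso.
  destruct (continuity_ab_min w 0 1) as [m [Hm Hm01]]. lra.
  { intros c Hc'. apply (deriv_cont _ _ (dw c)). apply Hd; auto. }
  assert (Hwm : w m < 0) by (specialize (Hm x Hx); lra).
  assert (Hm0 : 0 < m < 1).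
  { split; destruct (Req_dec m 0); destruct (Req_dec m 1); subst; try lra. }
  assert (Hdm : dw m = 0).
  { assert (pr : derivable_pt w m).
    { exists (dw m). apply is_derive_Reals. apply Hd; lra. }
    assert (Hp := deriv_minimum w 0 1 m pr (proj1 Hm0) (proj2 Hm0)).
    rewrite <- Hp. 2:{ intros y Hy1 Hy2. apply Hm; lra. }
    destruct pr as [l Hl]. simpl. apply (uniqueness_limite w m); auto.
    apply is_derive_Reals. apply Hd; lra. }
  assert (Hd2m : 0 <= d2w m).
  { destruct (Rle_lt_dec 0 (d2w m)) as [|Hn]; auto. exfalso.
    assert (Hl : derivable_pt_lim dw m (d2w m)) by (apply is_derive_Reals; apply Hd2; auto).
    destruct (Hl (- d2w m / 2)) as [del Hdel]. lra.
    set (h0 := Rmin (del / 2) ((1 - m) / 2)).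
    assert (Hh0 : 0 < h0 < del /\ m + h0 <= 1).
    { unfold h0, Rmin. destruct (Rle_dec (del / 2) ((1 - m) / 2)); pose proof (cond_pos del); lra. }
    destruct (MVT_cor2 w dw m (m + h0)) as [c [Hc1 Hc2]]. lra.
    { intros c Hc'. apply is_derive_Reals. apply Hd. lra. }
    assert (Hdc : dw c < 0).
    { specialize (Hdel (c - m)). replace (m + (c - m)) with c in Hdel by ring.
      assert (Habs : Rabs (c - m) < del) by (rewrite Rabs_pos_eq; lra).
      specialize (Hdel ltac:(lra) Habs). rewrite Hdm in Hdel.
      apply Rabs_def2 in Hdel. destruct Hdel as [Hd1 _].
      assert ((dw c - 0) / (c - m) < d2w m / 2) by lra.
      assert (dw c / (c - m) < 0) by (unfold Rdiv in *; rewrite Rminus_0_r in H; lra).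
      destruct (Rle_lt_dec 0 (dw c)); auto.
      assert (0 <= dw c / (c - m)) by (apply Rdiv_le_0_compat; lra). lra. }
    assert (w (m + h0) < w m) by nra.
    specialize (Hm (m + h0) ltac:(lra)). lra. }
  specialize (HL m Hm0). specialize (Hc m Hm0). rewrite Hdm in HL.
  assert (cc m * w m <= 0) by nra. nra.
Qed.

Lemma deriv0_nonneg (w : R -> R) l : w 0 = 0 -> (forall x, 0 <= x <= 1 -> 0 <= w x) -> is_derive w 0 l -> 0 <= l.
Proof.
  intros H0 Hp Hd. apply is_derive_Reals in Hd.
  destruct (Rle_lt_dec 0 l) as [|Hn]; auto. exfalso.
  destruct (Hd (- l / 2)) as [del Hdel]. lra.
  set (h := Rmin (del / 2) (1 / 2)).
  assert (0 < h < del /\ h <= 1) by (unfold h, Rmin; destruct (Rle_dec (del / 2) (1 / 2)); pose proof (cond_pos del); lra).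
  specialize (Hdel h ltac:(lra) ltac:(rewrite Rabs_pos_eq; lra)).
  rewrite Rplus_0_l, H0, Rminus_0_r in Hdel. apply Rabs_def2 in Hdel.
  assert (0 <= w h / h) by (apply Rdiv_le_0_compat; [apply Hp|]; lra). lra.
Qed.


Lemma C4_dom g : C4_01 g -> exists delta, 0 < delta /\ forall x, - delta < x < 1 + delta ->
   ex_derive g x /\ ex_derive (Derive g) x.
Proof.
  intros [d [Hd H]]. exists d. split; auto. intros x Hx. destruct (H x Hx) as [H1 _].
  split.
  - exact (H1 1%nat ltac:(lia)).
  - exact (H1 2%nat ltac:(lia)).
Qed.

Lemma C4_cont g : C4_01 g -> forall x, 0 <= x <= 1 -> continuity_pt g x.
Proof.
  intros Hg x Hx. destruct (C4_dom g Hg) as [d [Hd H]]. destruct (H x ltac:(lra)) as [H1 _].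
  apply continuity_pt_filterlim. apply (ex_derive_continuous g x). auto.
Qed.

Lemma C4_dcont g : C4_01 g -> forall x, 0 <= x <= 1 -> continuity_pt (Derive g) x.
Proof.
  intros Hg x Hx. destruct (C4_dom g Hg) as [d [Hd H]]. destruct (H x ltac:(lra)) as [_ H1].
  apply continuity_pt_filterlim. apply (ex_derive_continuous (Derive g) x). auto.
Qed.

Lemma bound01 g : (forall x, 0 <= x <= 1 -> continuity_pt g x) ->
  exists M, 0 <= M /\ forall x, 0 <= x <= 1 -> Rabs (g x) <= M.
Proof.
  intros Hc.
  destruct (continuity_ab_maj g 0 1) as [M1 [H1 _]]. lra. auto.
  destruct (continuity_ab_maj (fun x => - g x) 0 1) as [M2 [H2 _]]. lra.
  { intros c Hc'. apply continuity_pt_opp. auto. }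
  exists (Rmax 0 (Rmax (g M1) (- g M2))). split. apply Rmax_l.
  intros x Hx. specialize (H1 x Hx). specialize (H2 x Hx). simpl in H2.
  unfold Rabs. destruct (Rcase_abs (g x)).
  - apply Rle_trans with (- g M2); [lra|]. eapply Rle_trans; [|apply Rmax_r]. apply Rmax_r.
  - apply Rle_trans with (g M1); [lra|]. eapply Rle_trans; [|apply Rmax_r]. apply Rmax_l.
Qed.

Lemma min01 g beta : (forall x, 0 <= x <= 1 -> continuity_pt g x) -> (forall x, 0 <= x <= 1 -> beta < g x) ->
  exists m, beta < m /\ forall x, 0 <= x <= 1 -> m <= g x.
Proof.
  intros Hc Hb. destruct (continuity_ab_min g 0 1) as [m [H1 H2]]. lra. auto.
  exists (g m). split; auto.
Qed.

Lemma lip01 g : C4_01 g -> exists L, 0 <= L /\ forall x, 0 <= x <= 1 -> Rabs (g x - g 0) <= L * x.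
Proof.
  intros Hg. destruct (bound01 (Derive g) (C4_dcont g Hg)) as [L [HL H]].
  exists L. split; auto. intros x Hx.
  destruct (C4_dom g Hg) as [d [Hd Hdd]].
  replace (L * x) with (L * Rabs (x - 0)) by (rewrite Rminus_0_r, Rabs_pos_eq; lra).
  apply (mvt_bound g (Derive g)).
  - intros c Hc. unfold Rmin, Rmax in Hc. destruct (Rle_dec 0 x); try lra.
    apply Derive_correct. apply Hdd. lra.
  - intros c Hc. unfold Rmin, Rmax in Hc. destruct (Rle_dec 0 x); try lra. apply H. lra.
Qed.

Lemma Kbound (b c f : R -> R) (beta : R) : C4_01 b -> C4_01 c -> C4_01 f -> 0 < beta ->
  (forall x, 0 <= x <= 1 -> beta < b x) -> (forall x, 0 <= x <= 1 -> 0 <= c x) ->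
  exists CK, 0 <= CK /\ forall eps u, 0 < eps < 1 -> is_bvp_solution eps b c f u -> Rabs (eps * Derive u 0) <= CK.
Proof.
  intros Hb Hc Hf Hbeta Hbb Hcc.
  destruct (bound01 b (C4_cont b Hb)) as [Mb [HMb Hbnd]].
  destruct (bound01 c (C4_cont c Hc)) as [Mc [HMc Hcnd]].
  destruct (bound01 f (C4_cont f Hf)) as [Mf [HMf Hfnd]].
  set (gam := Mb + 1).
  set (kap := Mf / beta + 1).
  set (G0 := Mc * kap + Mf).
  set (Kp := (G0 + 1) / beta).
  assert (Hgam : 0 < gam) by (unfold gam; lra).
  assert (Hkap : 0 < kap) by (unfold kap; assert (0 <= Mf / beta) by (apply Rdiv_le_0_compat; lra); lra).
  assert (HG0 : 0 <= G0) by (unfold G0; assert (0 <= Mc * kap) by (apply Rmult_le_pos; lra); lra).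
  assert (HKp : 0 < Kp) by (unfold Kp; apply Rdiv_lt_0_compat; lra).
  assert (He1 : 0 < 1 - exp (- gam)).
  { assert (exp (- gam) < 1) by (rewrite <- exp_0; apply exp_increasing; lra). lra. }
  set (Ap := Kp / (1 - exp (- gam))).
  assert (HAp : 0 < Ap) by (unfold Ap; apply Rdiv_lt_0_compat; lra).
  exists (Ap * gam). split. apply Rmult_le_pos; lra.
  intros eps u He [[d [Hd Hu]] [Hode [Hu0 Hu1]]].
  assert (HD1 : forall x, 0 <= x <= 1 -> is_derive u x (Derive u x)).
  { intros x Hx. apply Derive_correct. apply (Hu x). lra. }
  assert (HD2 : forall x, 0 <= x <= 1 -> is_derive (Derive u) x (Derive (Derive u) x)).
  { intros x Hx. apply Derive_correct. exact (proj2 (Hu x ltac:(lra))). }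
  assert (HODE : forall x, 0 < x < 1 -> - eps * Derive (Derive u) x - b x * Derive u x + c x * u x = f x).
  { intros x Hx. exact (Hode x Hx). }
  assert (Hub : forall s, (s = 1 \/ s = -1) -> forall x, 0 <= x <= 1 -> 0 <= kap * (1 - x) + s * u x).
  { intros s Hs.
    apply (minprin eps (fun x => kap * (1 - x) + s * u x) (fun x => - kap + s * Derive u x)
              (fun x => 0 + s * Derive (Derive u) x) b c); try lra.
    - intros x Hx. assert (H1 : is_derive (fun x => kap * (1 - x)) x (- kap)) by (auto_derive; auto; ring).
      assert (H2 : is_derive (fun x => s * u x) x (s * Derive u x)) by (apply is_derive_scal; auto).
      exact (is_derive_plus _ _ _ _ _ H1 H2).
    - intros x Hx. assert (H1 : is_derive (fun _ : R => - kap) x 0) by (auto_derive; auto).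
      assert (H2 : is_derive (fun x => s * Derive u x) x (s * Derive (Derive u) x)) by (apply is_derive_scal; apply HD2; lra).
      exact (is_derive_plus _ _ _ _ _ H1 H2).
    - intros x Hx. apply Hcc. lra.
    - intros x Hx. specialize (HODE x Hx).
      assert (Hf1 : Rabs (f x) <= Mf) by (apply Hfnd; lra).
      assert (Hbx : beta < b x) by (apply Hbb; lra).
      assert (Hcx : 0 <= c x) by (apply Hcc; lra).
      replace (- eps * (0 + s * Derive (Derive u) x) - b x * (- kap + s * Derive u x) + c x * (kap * (1 - x) + s * u x))
        with (b x * kap + c x * kap * (1 - x) + s * f x) by (rewrite <- HODE; ring).
      assert (Hsf : - Mf <= s * f x) by (
         unfold Rabs in Hf1; destruct (Rcase_abs (f x)); destruct Hs; subst; lra).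
      assert (0 <= c x * kap * (1 - x)) by (apply Rmult_le_pos; [apply Rmult_le_pos|]; lra).
      assert (beta * kap = Mf + beta) by (unfold kap; field; lra).
      assert (beta * kap < b x * kap) by (apply Rmult_lt_compat_r; lra).
      lra.
    - cbv beta. rewrite Hu0. lra.
    - cbv beta. rewrite Hu1. lra. }
  assert (Hubd : forall x, 0 <= x <= 1 -> Rabs (u x) <= kap).
  { intros x Hx. pose proof (Hub 1 (or_introl eq_refl) x Hx). pose proof (Hub (-1) (or_intror eq_refl) x Hx).
    assert (0 <= kap * x) by (apply Rmult_le_pos; lra). apply Rabs_le. split; lra. }
  assert (Hd0 : forall s, (s = 1 \/ s = -1) -> 0 <= Ap * (gam / eps) * exp (- gam * 0 / eps) - Kp + s * Derive u 0).
  { intros s Hs.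
    set (w := fun x => (Ap * (1 - exp (- gam * x / eps)) - Kp * x) + s * u x).
    set (dw := fun x => (Ap * (gam / eps) * exp (- gam * x / eps) - Kp) + s * Derive u x).
    set (d2w := fun x => - (Ap * (gam / eps)^2 * exp (- gam * x / eps)) + s * Derive (Derive u) x).
    assert (Hw : forall x, 0 <= x <= 1 -> is_derive w x (dw x)).
    { intros x Hx. assert (H1 : is_derive (fun x => Ap * (1 - exp (- gam * x / eps)) - Kp * x) x
                               (Ap * (gam / eps) * exp (- gam * x / eps) - Kp)) by (auto_derive; auto; unfold Rdiv; field; lra).
      assert (H2 : is_derive (fun x => s * u x) x (s * Derive u x)) by (apply is_derive_scal; auto).
      exact (is_derive_plus _ _ _ _ _ H1 H2). }
    assert (Hw2 : forall x, 0 < x < 1 -> is_derive dw x (d2w x)).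
    { intros x Hx. assert (H1 : is_derive (fun x => Ap * (gam / eps) * exp (- gam * x / eps) - Kp) x
                               (- (Ap * (gam / eps)^2 * exp (- gam * x / eps)))) by (auto_derive; auto; unfold Rdiv; field; lra).
      assert (H2 : is_derive (fun x => s * Derive u x) x (s * Derive (Derive u) x)) by (apply is_derive_scal; apply HD2; lra).
      exact (is_derive_plus _ _ _ _ _ H1 H2). }
    assert (Hpos : forall x, 0 <= x <= 1 -> 0 <= w x).
    { apply (minprin eps w dw d2w b (fun _ => 0)); auto.
      - lra.
      - intros; lra.
      - intros x Hx. unfold w, dw, d2w. specialize (HODE x Hx).
        assert (Hf1 : Rabs (f x) <= Mf) by (apply Hfnd; lra).
        assert (Hc1 : Rabs (c x) <= Mc) by (apply Hcnd; lra).
        assert (Hu1' : Rabs (u x) <= kap) by (apply Hubd; lra).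
        assert (Hbx : beta < b x) by (apply Hbb; lra).
        assert (Hbx2 : b x <= gam).
        { pose proof (Hbnd x ltac:(lra)). unfold gam. unfold Rabs in H. destruct (Rcase_abs (b x)); lra. }
        assert (Hcu : Rabs (c x * u x) <= Mc * kap) by (rewrite Rabs_mult; apply Rmult_le_compat; auto; apply Rabs_pos).
        replace (- eps * (- (Ap * (gam / eps) ^ 2 * exp (- gam * x / eps)) + s * Derive (Derive u) x) -
                   b x * (Ap * (gam / eps) * exp (- gam * x / eps) - Kp + s * Derive u x) + 0 * (Ap * (1 - exp (- gam * x / eps)) - Kp * x + s * u x))
          with (Ap * (gam / eps) * exp (- gam * x / eps) * (gam - b x) + b x * Kp + s * (f x - c x * u x))
          by (rewrite <- HODE; field; lra).
        assert (0 <= Ap * (gam / eps) * exp (- gam * x / eps) * (gam - b x)).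
        { apply Rmult_le_pos; [|lra]. apply Rmult_le_pos; [|left; apply exp_pos].
          apply Rmult_le_pos; [lra|]. apply Rdiv_le_0_compat; lra. }
        assert (Hsf : - (Mf + Mc * kap) <= s * (f x - c x * u x)).
        { assert (Habs : Rabs (f x - c x * u x) <= Mf + Mc * kap).
          { unfold Rminus. eapply Rle_trans. apply Rabs_triang. rewrite Rabs_Ropp. lra. }
          unfold Rabs in Habs. destruct (Rcase_abs (f x - c x * u x)); destruct Hs; subst; lra. }
        assert (beta * Kp = G0 + 1) by (unfold Kp; field; lra).
        assert (beta * Kp < b x * Kp) by (apply Rmult_lt_compat_r; lra).
        unfold G0 in *. lra.
      - unfold w. rewrite Hu0. replace (- gam * 0 / eps) with 0 by (field; lra). rewrite exp_0. lra.
      - unfold w. rewrite Hu1.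
        assert (exp (- gam * 1 / eps) <= exp (- gam)).
        { apply exp_le_inv_le. replace (- gam * 1 / eps) with (- (gam / eps)) by (field; lra).
          apply Ropp_le_contravar. apply le_divR; [lra|]. assert (gam * eps <= gam * 1) by (apply Rmult_le_compat_l; lra). lra. }
        assert (Ap * (1 - exp (- gam)) = Kp) by (unfold Ap; field; lra).
        assert (Ap * exp (- gam * 1 / eps) <= Ap * exp (- gam)) by (apply Rmult_le_compat_l; lra).
        lra. }
    apply (deriv0_nonneg w (dw 0)); auto.
    - unfold w. rewrite Hu0. replace (- gam * 0 / eps) with 0 by (field; lra). rewrite exp_0. lra.
    - apply Hw. lra. }
  pose proof (Hd0 1 (or_introl eq_refl)). pose proof (Hd0 (-1) (or_intror eq_refl)).
  replace (- gam * 0 / eps) with 0 in * by (field; lra). rewrite exp_0 in *.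
  rewrite Rabs_mult, (Rabs_pos_eq eps) by lra.
  apply Rle_trans with (eps * (Ap * (gam / eps))).
  { apply Rmult_le_compat_l; [lra|]. apply Rabs_le. split; lra. }
  right. field. lra.
Qed.


Lemma exp_pow_n (t : R) (n : nat) : exp t ^ n = exp (INR n * t).
Proof.
  induction n. simpl. rewrite Rmult_0_l, exp_0; auto.
  simpl pow. rewrite IHn, <- exp_plus. f_equal. rewrite S_INR. ring.
Qed.

Lemma pe6 (g z : R) : 0 < g <= 1 -> 0 <= z -> (1 + z)^6 * exp (- g * z) <= (6 / g)^6.
Proof.
  intros Hg Hz.
  assert (H1 : g / 6 * (1 + z) <= 1 + g * z / 6) by (unfold Rdiv; nra).
  assert (H2 : (g / 6 * (1 + z))^6 <= (1 + g * z / 6)^6) by (apply pow_incr; split; [apply Rmult_le_pos|]; try lra; apply Rdiv_le_0_compat; lra).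
  assert (H3 : (1 + g * z / 6)^6 <= exp (g * z / 6)^6) by (apply pow_incr; split; [|apply X1]; assert (0 <= g * z / 6) by (apply Rdiv_le_0_compat; [apply Rmult_le_pos|]; lra); lra).
  rewrite exp_pow_n in H3. replace (INR 6 * (g * z / 6)) with (g * z) in H3 by (simpl; field).
  rewrite Rpow_mult_distr in H2.
  assert (Hg6 : 0 < (g / 6)^6) by (apply pow_lt; apply Rdiv_lt_0_compat; lra).
  assert (Hexp : exp (g * z) * exp (- g * z) = 1) by (rewrite <- exp_plus; replace (g * z + - g * z) with 0 by ring; apply exp_0).
  assert ((1 + z)^6 <= exp (g * z) / (g / 6)^6) by (apply le_divR; [lra|]; rewrite Rmult_comm; lra).
  replace ((6 / g)^6) with (/ (g / 6)^6) by (rewrite <- pow_inv; f_equal; field; lra).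
  apply Rle_trans with (exp (g * z) / (g / 6)^6 * exp (- g * z)).
  apply Rmult_le_compat_r; [left; apply exp_pos|auto].
  right. unfold Rdiv. rewrite Rmult_assoc, (Rmult_comm (/ _)), <- Rmult_assoc, Hexp. ring.
Qed.

Lemma pe_main (bm g z : R) : 0 <= bm -> 0 < g -> 0 <= z ->
  z^2 * (1 + bm * z)^4 * exp (- g * z) <= (1 + bm)^4 * (6 / Rmin g 1)^6.
Proof.
  intros Hb Hg Hz. set (c := Rmin g 1).
  assert (Hc : 0 < c <= 1) by (unfold c, Rmin; destruct (Rle_dec g 1); lra).
  assert (Hcg : c <= g) by (unfold c, Rmin; destruct (Rle_dec g 1); lra).
  assert (Hp : z^2 * (1 + bm * z)^4 <= (1 + bm)^4 * (1 + z)^6).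
  { assert (z^2 <= (1 + z)^2) by (apply pow_incr; lra).
    assert ((1 + bm * z)^4 <= ((1 + bm) * (1 + z))^4) by (apply pow_incr; split; nra).
    rewrite Rpow_mult_distr in H0.
    replace ((1 + bm)^4 * (1 + z)^6) with ((1 + z)^2 * ((1 + bm)^4 * (1 + z)^4)) by ring.
    apply Rmult_le_compat; auto. apply pow2_ge_0. apply pow_le; nra. }
  assert (He : exp (- g * z) <= exp (- c * z)) by (apply exp_le_inv_le; nra).
  pose proof (pe6 c z Hc Hz).
  assert (0 <= (1 + bm)^4) by (apply pow_le; lra).
  apply Rle_trans with ((1 + bm)^4 * (1 + z)^6 * exp (- c * z)).
  apply Rmult_le_compat; auto. apply Rmult_le_pos; [apply pow2_ge_0|apply pow_le; nra]. left; apply exp_pos.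
  rewrite Rmult_assoc. apply Rmult_le_compat_l; auto.
Qed.

Lemma pe_lin (k l : R) : 0 < k -> 0 <= l -> l * exp (- k * l) <= / k.
Proof.
  intros Hk Hl. pose proof (X1 (k * l)).
  assert (Hexp : exp (k * l) * exp (- k * l) = 1) by (rewrite <- exp_plus; replace (k * l + - k * l) with 0 by ring; apply exp_0).
  pose proof (exp_pos (- k * l)).
  apply Rmult_le_reg_l with k; auto. rewrite Rinv_r by lra.
  assert (k * l <= exp (k * l)) by lra. nra.
Qed.


Lemma v_D1 eps (b u : R -> R) y : 0 < eps ->
  Derive (vlayer eps b u) y = - (eps * Derive u 0 / b 0) * exp (- b 0 * y / eps) * (- b 0 / eps).
Proof.
  intros He. apply is_derive_unique. unfold vlayer.
  set (K0 := - (eps * Derive u 0 / b 0)). set (c0 := b 0).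
  auto_derive; auto. unfold Rdiv. field. lra.
Qed.

Lemma v_D2 eps (b u : R -> R) y : 0 < eps ->
  Derive_n (vlayer eps b u) 2 y = - (eps * Derive u 0 / b 0) * exp (- b 0 * y / eps) * (b 0 / eps)^2.
Proof.
  intros He. change (Derive_n (vlayer eps b u) 2 y) with (Derive (Derive_n (vlayer eps b u) 1) y).
  rewrite (Derive_ext (Derive_n (vlayer eps b u) 1) (fun y => - (eps * Derive u 0 / b 0) * exp (- b 0 * y / eps) * (- b 0 / eps))).
  2:{ intros t. change (Derive_n (vlayer eps b u) 1 t) with (Derive (vlayer eps b u) t). apply v_D1; auto. }
  apply is_derive_unique.
  set (K0 := - (eps * Derive u 0 / b 0)). set (c0 := b 0).
  auto_derive; auto. unfold Rdiv. field. lra.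
Qed.

Lemma tau_node eps a beta lam N J (b u : R -> R) i : (1 <= i)%nat -> 0 < eps -> 0 < b 0 ->
  0 < mesh eps a beta lam N J i - mesh eps a beta lam N J (i - 1) ->
  0 < mesh eps a beta lam N J (S i) - mesh eps a beta lam N J i ->
  0 < b (mesh eps a beta lam N J i) ->
  tau eps a beta lam N J b (vlayer eps b u) i =
    - (eps * Derive u 0 / b 0) * exp (- b 0 * mesh eps a beta lam N J i / eps) *
    Tn eps (b 0) (b (mesh eps a beta lam N J i))
       (mesh eps a beta lam N J i - mesh eps a beta lam N J (i - 1))
       (mesh eps a beta lam N J (S i) - mesh eps a beta lam N J i).
Proof.
  intros Hi He Hb0 Hp Hq Hbi.
  unfold Defs.tau, Defs.Dsecond, Defs.Dplus, Defs.Dminus, Defs.hbar, Defs.rho, Defs.hstep.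
  replace (S i - 1)%nat with i by lia.
  rewrite v_D1, v_D2 by auto.
  set (xm := mesh eps a beta lam N J (i - 1)) in *.
  set (x0 := mesh eps a beta lam N J i) in *.
  set (xp := mesh eps a beta lam N J (S i)) in *.
  set (c0 := b 0) in *. set (bi := b x0) in *.
  set (K0 := - (eps * Derive u 0 / c0)).
  set (p := x0 - xm) in *. set (q := xp - x0) in *.
  unfold vlayer. fold c0. fold K0.
  assert (Exp : exp (- c0 * xp / eps) = exp (- c0 * x0 / eps) * exp (- (c0 / eps * q))).
  { rewrite <- exp_plus. f_equal. unfold q. field. lra. }
  assert (Exm : exp (- c0 * xm / eps) = exp (- c0 * x0 / eps) * exp (c0 / eps * p)).
  { rewrite <- exp_plus. f_equal. unfold p. field. lra. }
  rewrite Exp, Exm.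
  unfold Defs.sigma. destruct (Rlt_dec 0 (bi * q / (2 * eps))) as [Hr|Hr].
  2:{ exfalso. apply Hr. apply Rdiv_lt_0_compat; [apply Rmult_lt_0_compat|]; lra. }
  replace (2 * (bi * q / (2 * eps))) with (bi * q / eps) by (field; lra).
  assert (HS : 0 < bi * q / eps) by (apply Rdiv_lt_0_compat; [apply Rmult_lt_0_compat|]; lra).
  pose proof (expm1_pos _ HS).
  unfold Tn. fold p q.
  field. repeat split; lra.
Qed.


Lemma unif_gen (eps q x b0 bi L bmax bmin beta gam : R) :
  0 < eps <= 1 -> 0 < q <= x -> 0 < b0 <= bmax -> 0 < bi <= bmax -> 0 <= L ->
  Rabs (bi - b0) <= L * x -> bmin <= b0 -> gam = (bmin - beta) / 2 -> beta < bmin -> L * q <= gam ->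
  Rabs (exp (- b0 * x / eps) * Tn eps b0 bi q q) <=
    bmax^2 * L^2 / 6 * ((1 + bmax)^4 * (6 / Rmin gam 1)^6) * (q / eps)^2 * exp (- beta * x / eps).
Proof.
  intros He Hq Hb0 Hbi HL Hd Hbm Hgam Hbb HLq.
  eapply Rle_trans. apply (unif_bound eps b0 bi q x L bmax); auto; lra.
  set (z := x / eps).
  assert (Hz : 0 <= z) by (unfold z; apply Rdiv_le_0_compat; lra).
  assert (Hg : 0 < gam) by lra.
  assert (HP := pe_main bmax gam z ltac:(lra) Hg Hz).
  assert (Hexp : exp (- (b0 - L * q) * x / eps) <= exp (- beta * x / eps) * exp (- gam * z)).
  { rewrite <- exp_plus. apply exp_le_inv_le. unfold z.
    replace (- beta * x / eps + - gam * (x / eps)) with (- (beta + gam) * (x / eps)) by (field; lra).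
    replace (- (b0 - L * q) * x / eps) with (- (b0 - L * q) * (x / eps)) by (field; lra).
    assert (0 <= (b0 - L * q - (beta + gam)) * (x / eps)) by (apply Rmult_le_pos; [lra|unfold z in Hz; lra]). lra. }
  assert (HK : 0 <= bmax ^ 2 * L ^ 2 / 6 * (q / eps) ^ 2) by
    (apply Rmult_le_pos; [apply Rmult_le_pos; [apply Rmult_le_pos; apply pow2_ge_0|lra]|apply pow2_ge_0]).
  assert (HP0 : 0 <= z ^ 2 * (1 + bmax * z) ^ 4) by (apply Rmult_le_pos; [apply pow2_ge_0|apply pow_le; nra]).
  pose proof (exp_pos (- beta * x / eps)).
  apply Rle_trans with (bmax ^ 2 * L ^ 2 / 6 * (q / eps) ^ 2 * (z ^ 2 * (1 + bmax * z) ^ 4 * exp (- gam * z)) * exp (- beta * x / eps)).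
  - replace (bmax ^ 2 * L ^ 2 / 6 * (q / eps) ^ 2 * eps * (z ^ 2 * (1 + bmax * z) ^ 4) * exp (- (b0 - L * q) * x / eps))
      with (bmax ^ 2 * L ^ 2 / 6 * (q / eps) ^ 2 * (z ^ 2 * (1 + bmax * z) ^ 4) * (eps * exp (- (b0 - L * q) * x / eps))) by ring.
    replace (bmax ^ 2 * L ^ 2 / 6 * (q / eps) ^ 2 * (z ^ 2 * (1 + bmax * z) ^ 4 * exp (- gam * z)) * exp (- beta * x / eps))
      with (bmax ^ 2 * L ^ 2 / 6 * (q / eps) ^ 2 * (z ^ 2 * (1 + bmax * z) ^ 4) * (exp (- beta * x / eps) * exp (- gam * z))) by ring.
    apply Rmult_le_compat_l. apply Rmult_le_pos; auto.
    apply Rle_trans with (1 * exp (- (b0 - L * q) * x / eps)). apply Rmult_le_compat_r; [left; apply exp_pos|lra]. lra.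
  - replace (bmax ^ 2 * L ^ 2 / 6 * ((1 + bmax) ^ 4 * (6 / Rmin gam 1) ^ 6) * (q / eps) ^ 2 * exp (- beta * x / eps))
      with (bmax ^ 2 * L ^ 2 / 6 * (q / eps) ^ 2 * ((1 + bmax) ^ 4 * (6 / Rmin gam 1) ^ 6) * exp (- beta * x / eps)) by ring.
    apply Rmult_le_compat_r; [lra|]. apply Rmult_le_compat_l; auto.
Qed.


Lemma abs_K0E (K0 KK Y M : R) : Rabs K0 <= KK -> Rabs Y <= M -> Rabs (K0 * Y) <= KK * M.
Proof. intros. rewrite Rabs_mult. apply Rmult_le_compat; auto; apply Rabs_pos. Qed.

Lemma fine_bound (eps l h x b0 bi L bmax bmin beta gam K0 KK a Q n : R) :
  0 < eps <= 1 -> 0 < h <= x -> 0 < b0 <= bmax -> 0 < bi <= bmax -> 0 <= L -> Rabs (bi - b0) <= L * x ->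
  bmin <= b0 -> gam = (bmin - beta) / 2 -> beta < bmin -> L * h <= gam -> Rabs K0 <= KK -> 0 < n ->
  0 < beta -> 0 < Q -> h / eps = a * l / (beta * Q * n) ->
  Rabs (K0 * exp (- b0 * x / eps) * Tn eps b0 bi h h) <=
    KK * (bmax^2 * L^2 / 6 * ((1 + bmax)^4 * (6 / Rmin gam 1)^6) * (a / (beta * Q))^2) * (l^2 * / n^2 * exp (- beta * x / eps)).
Proof.
  intros. rewrite (Rmult_assoc K0). rewrite (Rmult_assoc KK). apply abs_K0E; [exact H9|].
  eapply Rle_trans. apply (unif_gen eps h x b0 bi L bmax bmin beta gam); auto.
  rewrite H13. right. assert (0 < beta * Q) by nra. assert (0 < beta * Q * n) by nra. field. repeat split; try lra. unfold Rmin; destruct (Rle_dec gam 1); lra.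
Qed.

Lemma coarse_bound (eps H x xi b0 bi L bmax bmin beta gam K0 KK Q n R2 : R) :
  0 < eps <= 1 -> 0 < H -> xi + H <= x -> 0 <= xi -> 0 < b0 <= bmax -> 0 < bi <= bmax -> 0 <= L ->
  Rabs (bi - b0) <= L * x -> bmin <= b0 -> gam = (bmin - beta) / 2 -> beta < bmin -> L * H <= gam ->
  Rabs K0 <= KK -> 0 < n -> H <= / ((1 - Q) * n) -> 0 < 1 - Q -> exp (- beta * xi / eps) = R2 * eps^2 -> 0 < R2 -> 0 < beta ->
  Rabs (K0 * exp (- b0 * x / eps) * Tn eps b0 bi H H) <=
    KK * (bmax^2 * L^2 / 6 * ((1 + bmax)^4 * (6 / Rmin gam 1)^6) * ((1 + 0)^4 * (6 / Rmin beta 1)^6 + / (1 - Q)^2))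
       * (R2 * Rmin (eps^2) (/ n^2)).
Proof.
  intros He HH Hx Hxi Hb0 Hbi HL Hd Hbm Hgam Hbb HLH HK Hn HHn HQ HR2 HR20 Hbeta.
  rewrite (Rmult_assoc K0). rewrite (Rmult_assoc KK). apply abs_K0E; [exact HK|].
  eapply Rle_trans. apply (unif_gen eps H x b0 bi L bmax bmin beta gam); auto; lra.
  set (G := bmax ^ 2 * L ^ 2 / 6 * ((1 + bmax) ^ 4 * (6 / Rmin gam 1) ^ 6)).
  set (Ce := (1 + 0) ^ 4 * (6 / Rmin beta 1) ^ 6).
  set (eta := H / eps).
  assert (HG : 0 <= G).
  { unfold G. apply Rmult_le_pos. apply Rmult_le_pos; [apply Rmult_le_pos; apply pow2_ge_0|lra].
    apply Rmult_le_pos; apply pow_le. lra. unfold Rmin; destruct (Rle_dec gam 1); apply Rdiv_le_0_compat; lra. }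
  assert (Heta : 0 <= eta) by (unfold eta; apply Rdiv_le_0_compat; lra).
  assert (HPe := pe_main 0 beta eta ltac:(lra) Hbeta Heta).
  fold Ce in HPe. replace (1 + 0 * eta) with 1 in HPe by ring. rewrite pow1, Rmult_1_r in HPe.
  assert (Hex : exp (- beta * x / eps) <= R2 * eps^2 * exp (- beta * eta)).
  { rewrite <- HR2, <- exp_plus. apply exp_le_inv_le. unfold eta.
    assert (beta * (xi + H) <= beta * x) by (apply Rmult_le_compat_l; lra).
    apply Rmult_le_reg_r with eps. lra. field_simplify; try lra. }
  assert (HCe : 0 <= Ce) by (unfold Ce; apply Rmult_le_pos; apply pow_le; [lra|]; unfold Rmin; destruct (Rle_dec beta 1); apply Rdiv_le_0_compat; lra).
  assert (Hea : 0 < exp (- beta * eta)) by apply exp_pos.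
  assert (Hea1 : exp (- beta * eta) <= 1) by (rewrite <- exp_0; apply exp_le_inv_le; nra).
  assert (Hm : eta ^ 2 * exp (- beta * eta) <= Ce) by lra.
  assert (Hmain : G * eta ^ 2 * exp (- beta * x / eps) <= G * (eta ^ 2 * exp (- beta * eta)) * (R2 * eps^2)).
  { replace (G * (eta ^ 2 * exp (- beta * eta)) * (R2 * eps ^ 2)) with (G * eta^2 * (R2 * eps^2 * exp (- beta * eta))) by ring.
    apply Rmult_le_compat_l; auto. apply Rmult_le_pos; auto. apply pow2_ge_0. }
  fold eta. 
  assert (HA : G * eta ^ 2 * exp (- beta * x / eps) <= G * (Ce + / (1 - Q)^2) * (R2 * eps^2)).
  { eapply Rle_trans. exact Hmain. apply Rmult_le_compat_r. apply Rmult_le_pos; [lra|apply pow2_ge_0].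
    apply Rmult_le_compat_l; auto. assert (0 <= / (1 - Q)^2) by (left; apply Rinv_0_lt_compat, pow_lt; lra). lra. }
  assert (HB : G * eta ^ 2 * exp (- beta * x / eps) <= G * (Ce + / (1 - Q)^2) * (R2 * / n^2)).
  { eapply Rle_trans. exact Hmain.
    assert (H2 : eta^2 * eps^2 = H^2) by (unfold eta; field; lra).
    assert (H3 : H^2 <= / (1 - Q)^2 * / n^2).
    { rewrite <- Rinv_mult, <- Rpow_mult_distr. rewrite <- pow_inv. apply pow_incr. split; lra. }
    apply Rle_trans with (G * R2 * (/ (1 - Q)^2 * / n^2)).
    - replace (G * (eta ^ 2 * exp (- beta * eta)) * (R2 * eps ^ 2)) with (G * R2 * (eta^2 * eps^2) * exp (- beta * eta)) by ring.
      rewrite H2. apply Rle_trans with (G * R2 * H^2 * 1). apply Rmult_le_compat_l; auto.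
      apply Rmult_le_pos; [apply Rmult_le_pos|apply pow2_ge_0]; lra.
      rewrite Rmult_1_r. apply Rmult_le_compat_l; auto. apply Rmult_le_pos; lra.
    - replace (G * (Ce + / (1 - Q) ^ 2) * (R2 * / n ^ 2)) with (G * R2 * ((Ce + / (1 - Q) ^ 2) * / n^2)) by ring.
      apply Rmult_le_compat_l. apply Rmult_le_pos; lra.
      apply Rmult_le_compat_r. left; apply Rinv_0_lt_compat, pow_lt; lra. lra. }
  unfold Rmin. destruct (Rle_dec (eps ^ 2) (/ n ^ 2)); [exact HA|exact HB].
Qed.

Lemma J_bound (eps h H xi b0 bi L bmax K0 KK Q n R2 Cl : R) :
  0 < eps <= 1 -> 0 < h <= H -> 0 < b0 <= bmax -> 0 < bi <= bmax -> 0 <= L -> 0 <= Cl ->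
  Rabs K0 <= KK -> 1 <= n -> / n <= H <= / ((1 - Q) * n) -> 0 < 1 - Q -> 0 < R2 ->
  exp (- b0 * xi / eps) <= R2 * eps^2 ->
  exp (- b0 * xi / eps) * exp (b0 * h / eps) <= R2 * eps^2 ->
  b0 / eps * Rabs (bi - b0) * exp (- b0 * xi / eps) <= Cl * (R2 * eps^2) ->
  Rabs (bi - b0) <= L ->
  Rabs (K0 * exp (- b0 * xi / eps) * Tn eps b0 bi h H) <=
    KK * ((2 + 2 * bmax + bmax + Cl) + bmax^2 * (L * (2 + bmax / (1 - Q) * exp (bmax / (1 - Q))) + bmax * (exp (bmax / (1 - Q)) + 1)) / (1 - Q))
       * (R2 * Rmin (eps^2) (/ n^2) * n).
Proof.
  intros He Hh Hb0 Hbi HL HCl HK Hn HHn HQ HR2 HE HEG HEl Hd.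
  rewrite (Rmult_assoc K0), (Rmult_assoc KK). apply abs_K0E; [exact HK|].
  set (E := exp (- b0 * xi / eps)) in *.
  assert (HE0 : 0 < E) by apply exp_pos.
  set (Amax := bmax / (1 - Q)).
  assert (HAm : 0 <= Amax) by (unfold Amax; apply Rdiv_le_0_compat; lra).
  set (CI := 2 + 2 * bmax + bmax + Cl).
  set (CII := bmax ^ 2 * (L * (2 + Amax * exp Amax) + bmax * (exp Amax + 1)) / (1 - Q)).
  assert (HCI : 0 <= CI) by (unfold CI; lra).
  assert (HCII : 0 <= CII).
  { unfold CII. apply Rdiv_le_0_compat; [|lra]. apply Rmult_le_pos. apply pow2_ge_0.
    pose proof (exp_pos Amax). assert (0 <= Amax * exp Amax) by (apply Rmult_le_pos; lra).
    assert (0 <= L * (2 + Amax * exp Amax)) by (apply Rmult_le_pos; lra).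
    assert (0 <= bmax * (exp Amax + 1)) by (apply Rmult_le_pos; lra). lra. }
  assert (Hn0 : 0 < n) by lra.
  assert (HH0 : 0 < H) by lra.
  rewrite Rabs_mult, (Rabs_pos_eq E) by lra.
  destruct (Rle_dec (eps * n) 1) as [HI|HII].
  -
    assert (Hmin : Rmin (eps^2) (/ n^2) = eps^2).
    { apply Rmin_left. rewrite <- pow_inv. apply pow_incr. split; [lra|].
      apply Rmult_le_reg_r with n; auto. rewrite Rinv_l by lra. lra. }
    rewrite Hmin.
    pose proof (JI eps b0 bi h H bmax ltac:(lra) Hh ltac:(lra) Hbi) as HJ.
    assert (HinvH : / H <= n).
    { replace n with (/ / n) by (field; lra). apply Rinv_le_contravar; [apply Rinv_0_lt_compat; lra|lra]. }
    assert (Hinv0 : 0 < / H) by (apply Rinv_0_lt_compat; lra).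
    assert (T1 : E * (2 * eps / H^2) <= 2 * (R2 * eps^2) * n).
    { replace (E * (2 * eps / H ^ 2)) with (2 * E * (eps * / H) * / H) by (field; lra).
      assert (eps * / H <= eps * n) by (apply Rmult_le_compat_l; lra).
      assert (2 * E * (eps * / H) * / H <= 2 * (R2 * eps^2) * 1 * n).
      { apply Rmult_le_compat. apply Rmult_le_pos; [lra|]. apply Rmult_le_pos; lra. lra.
        apply Rmult_le_compat. lra. apply Rmult_le_pos; lra. lra. lra. lra. }
      lra. }
    assert (T2 : E * (2 * b0 * exp (b0 * h / eps) / H) <= 2 * bmax * (R2 * eps^2) * n).
    { replace (E * (2 * b0 * exp (b0 * h / eps) / H)) with (2 * b0 * (E * exp (b0 * h / eps)) * / H) by (field; lra).
      apply Rmult_le_compat. apply Rmult_le_pos; [lra|]. apply Rmult_le_pos; [lra|left; apply exp_pos]. lra.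
      apply Rmult_le_compat; try lra. apply Rmult_le_pos; [lra|left; apply exp_pos]. lra. }
    assert (T3 : E * (bmax / H) <= bmax * (R2 * eps^2) * n).
    { replace (E * (bmax / H)) with (bmax * E * / H) by (field; lra).
      apply Rmult_le_compat. apply Rmult_le_pos; lra. lra. apply Rmult_le_compat_l; lra. lra. }
    assert (T4 : E * (b0 / eps * Rabs (bi - b0)) <= Cl * (R2 * eps^2) * n).
    { rewrite Rmult_comm. apply Rle_trans with (Cl * (R2 * eps^2) * 1). lra.
      apply Rmult_le_compat_l. apply Rmult_le_pos; [lra|]. apply Rmult_le_pos; [lra|apply pow2_ge_0]. lra. }
    assert (HR : 0 <= R2 * eps^2 * n) by (apply Rmult_le_pos; [apply Rmult_le_pos; [lra|apply pow2_ge_0]|lra]).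
    apply Rle_trans with (E * (2 * eps / H ^ 2 + 2 * b0 * exp (b0 * h / eps) / H + bmax / H + b0 / eps * Rabs (bi - b0))).
    apply Rmult_le_compat_l; lra.
    apply Rle_trans with (CI * (R2 * eps^2 * n)).
    + unfold CI. rewrite !Rmult_plus_distr_l. rewrite !Rmult_plus_distr_r. lra.
    + apply Rmult_le_compat_r; auto. assert (0 <= CII) by auto. lra.
  -
    assert (Hmin : Rmin (eps^2) (/ n^2) = / n^2).
    { apply Rmin_right. rewrite <- pow_inv. apply pow_incr. split; [left; apply Rinv_0_lt_compat; lra|].
      apply Rmult_le_reg_r with n; auto. rewrite Rinv_l by lra. lra. }
    rewrite Hmin.
    assert (HAb : b0 * H / eps <= Amax).
    { unfold Amax. apply Rle_trans with (bmax * (/ ((1 - Q) * n)) / eps).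
      unfold Rdiv. apply Rmult_le_compat_r. left; apply Rinv_0_lt_compat; lra. apply Rmult_le_compat; lra.
      apply divR_le; [lra|]. unfold Rdiv. rewrite Rinv_mult.
      replace (bmax * (/ (1 - Q) * / n)) with (bmax * / (1 - Q) * / n) by ring.
      apply Rle_trans with (bmax * / (1 - Q) * eps). apply Rmult_le_compat_l.
      apply Rmult_le_pos; [lra|left; apply Rinv_0_lt_compat; lra].
      apply Rmult_le_reg_r with n; auto. rewrite Rinv_l by lra. lra. lra. }
    pose proof (JII eps b0 bi h H Amax ltac:(lra) Hh ltac:(lra) ltac:(lra) HAb) as HJ.
    apply Rle_trans with (E * (b0 ^ 2 * H / eps ^ 2 * (Rabs (bi - b0) * (2 + Amax * exp Amax) + b0 * (exp Amax + 1)))).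
    apply Rmult_le_compat_l; lra.
    assert (HX : Rabs (bi - b0) * (2 + Amax * exp Amax) + b0 * (exp Amax + 1) <= L * (2 + Amax * exp Amax) + bmax * (exp Amax + 1)).
    { pose proof (exp_pos Amax). assert (0 <= Amax * exp Amax) by (apply Rmult_le_pos; lra).
      apply Rplus_le_compat; apply Rmult_le_compat_r; lra. }
    assert (HX0 : 0 <= Rabs (bi - b0) * (2 + Amax * exp Amax) + b0 * (exp Amax + 1)).
    { pose proof (exp_pos Amax). assert (0 <= Amax * exp Amax) by (apply Rmult_le_pos; lra).
      assert (0 <= Rabs (bi - b0)) by apply Rabs_pos. apply Rplus_le_le_0_compat; apply Rmult_le_pos; lra. }
    replace (E * (b0 ^ 2 * H / eps ^ 2 * (Rabs (bi - b0) * (2 + Amax * exp Amax) + b0 * (exp Amax + 1))))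
      with ((E / eps^2) * b0^2 * H * (Rabs (bi - b0) * (2 + Amax * exp Amax) + b0 * (exp Amax + 1))) by (field; lra).
    assert (HEe : E / eps^2 <= R2) by (apply divR_le; [apply pow_lt; lra|lra]).
    assert (Hb2 : b0^2 <= bmax^2) by (apply pow_incr; lra).
    apply Rle_trans with (R2 * bmax^2 * / ((1 - Q) * n) * (L * (2 + Amax * exp Amax) + bmax * (exp Amax + 1))).
    + apply Rmult_le_compat; auto.
      * apply Rmult_le_pos; [apply Rmult_le_pos|lra]. apply Rdiv_le_0_compat; [lra|apply pow_lt; lra]. apply pow2_ge_0.
      * apply Rmult_le_compat; try lra. apply Rmult_le_pos. apply Rdiv_le_0_compat; [lra|apply pow_lt; lra]. apply pow2_ge_0.
        apply Rmult_le_compat; try lra. apply Rdiv_le_0_compat; [lra|apply pow_lt; lra]. apply pow2_ge_0.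
    + replace (R2 * bmax ^ 2 * / ((1 - Q) * n) * (L * (2 + Amax * exp Amax) + bmax * (exp Amax + 1)))
        with (CII * (R2 * / n ^ 2 * n)) by (unfold CII; field; lra).
      apply Rmult_le_compat_r. apply Rmult_le_pos; [apply Rmult_le_pos|]; [lra|left; apply Rinv_0_lt_compat, pow_lt|]; lra.
      lra.
Qed.


Lemma mesh_lo eps a beta lam N J i : (i <= J)%nat ->
  mesh eps a beta lam N J i = INR i * (xi_mesh eps a beta lam / INR J).
Proof. intros Hi. unfold mesh. cbv zeta. apply Nat.leb_le in Hi. rewrite Hi. reflexivity. Qed.

Lemma mesh_hi eps a beta lam N J i : (J <= i)%nat -> INR J <> 0 ->
  mesh eps a beta lam N J i = xi_mesh eps a beta lam + (INR i - INR J) * ((1 - xi_mesh eps a beta lam) / (INR N - INR J)).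
Proof.
  intros Hi HJ. unfold mesh. cbv zeta. destruct (i <=? J) eqn:E.
  - apply Nat.leb_le in E. assert (i = J) by lia. subst. rewrite Rminus_diag_eq, Rmult_0_l, Rplus_0_r by auto. field. auto.
  - reflexivity.
Qed.

Theorem lemma2 :
  forall (b c f : R -> R) (beta Q a : R),
    C4_01 b -> C4_01 c -> C4_01 f ->
    0 < beta ->
    (forall x, 0 <= x <= 1 -> beta < b x) ->
    (forall x, 0 <= x <= 1 -> 0 <= c x) ->
    (exists p q : Z, (0 < q)%Z /\ Q = IZR p / IZR q) ->
    0 < Q < 1 ->
    2 <= a ->
  exists (N0 : nat) (C : R),
    forall (eps : R) (N J : nat) (u : R -> R),
      0 < eps < 1 ->
      (0 < N)%nat -> (N0 <= N)%nat ->
      INR J = Q * INR N ->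
      xi_mesh eps a beta (/ eps) <= Q ->
      is_bvp_solution eps b c f u ->
      let x := mesh eps a beta (/ eps) N J in
      let mu := Rpower eps (a - 2) * Rmin (eps ^ 2) (/ (INR N ^ 2)) in
      let t := tau eps a beta (/ eps) N J b (vlayer eps b u) in
      (forall i : nat, (1 <= i <= J - 1)%nat ->
         Rabs (t i) <= C * ((ln eps) ^ 2 * / (INR N ^ 2) * exp (- beta * x i / eps))) /\
      (Rabs (t J) <= C * (mu * INR N)) /\
      (forall i : nat, (J + 1 <= i <= N - 1)%nat ->
         Rabs (t i) <= C * mu).
Proof.
  intros b c f beta Q a Hb Hc Hf Hbeta Hbb Hcc _ HQ Ha.
  destruct (min01 b beta (C4_cont b Hb) Hbb) as [bmin [Hbmin Hbminb]].
  destruct (bound01 b (C4_cont b Hb)) as [bmax [Hbmax0 Hbmaxb]].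
  destruct (lip01 b Hb) as [L [HL HLb]].
  destruct (Kbound b c f beta Hb Hc Hf Hbeta Hbb Hcc) as [CK [HCK HKb]].
  assert (Hbx : forall y, 0 <= y <= 1 -> bmin <= b y <= bmax).
  { intros y Hy. split. apply Hbminb; auto. pose proof (Hbmaxb y Hy). unfold Rabs in H. destruct (Rcase_abs (b y)); lra. }
  set (b0 := b 0).
  assert (Hb0 : bmin <= b0 <= bmax) by (apply Hbx; lra).
  set (gam := (bmin - beta) / 2).
  assert (Hgam : 0 < gam) by (unfold gam; lra).
  set (KK := CK / beta).
  assert (HKK : 0 <= KK) by (unfold KK; apply Rdiv_le_0_compat; lra).
  set (Cp := (1 + bmax)^4 * (6 / Rmin gam 1)^6).
  assert (HCp : 0 <= Cp).
  { unfold Cp. apply Rmult_le_pos; apply pow_le. lra. unfold Rmin; destruct (Rle_dec gam 1); apply Rdiv_le_0_compat; lra. }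
  set (Cf := KK * (bmax^2 * L^2 / 6 * Cp * (a / (beta * Q))^2)).
  set (Ce := (1 + 0)^4 * (6 / Rmin beta 1)^6).
  assert (HCe : 0 <= Ce).
  { unfold Ce. apply Rmult_le_pos; apply pow_le. lra. unfold Rmin; destruct (Rle_dec beta 1); apply Rdiv_le_0_compat; lra. }
  set (Cc := KK * (bmax^2 * L^2 / 6 * Cp * (Ce + / (1 - Q)^2))).
  set (kap := (bmin / beta - 1) * a).
  assert (Hkap : 0 < kap).
  { unfold kap. apply Rmult_lt_0_compat; [|lra]. assert (1 < bmin / beta) by (apply le_divR_strict_helper || (apply Rmult_lt_reg_r with beta; [lra|]; unfold Rdiv; rewrite Rmult_assoc, Rinv_l; lra)). lra. }
  set (Cl := bmax * L * (a / beta) * / kap).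
  assert (HCl : 0 <= Cl).
  { unfold Cl. apply Rmult_le_pos. apply Rmult_le_pos. apply Rmult_le_pos; lra. apply Rdiv_le_0_compat; lra.
    left; apply Rinv_0_lt_compat; lra. }
  set (CJ := KK * ((2 + 2 * bmax + bmax + Cl) + bmax^2 * (L * (2 + bmax / (1 - Q) * exp (bmax / (1 - Q))) + bmax * (exp (bmax / (1 - Q)) + 1)) / (1 - Q))).
  assert (HCf : 0 <= Cf).
  { unfold Cf. apply Rmult_le_pos; auto. apply Rmult_le_pos; [|apply pow2_ge_0].
    apply Rmult_le_pos; auto. apply Rmult_le_pos; [|lra]. apply Rmult_le_pos; apply pow2_ge_0. }
  assert (HCc : 0 <= Cc).
  { unfold Cc. apply Rmult_le_pos; auto. apply Rmult_le_pos.
    apply Rmult_le_pos; auto. apply Rmult_le_pos; [|lra]. apply Rmult_le_pos; apply pow2_ge_0.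
    assert (0 <= / (1 - Q)^2) by (left; apply Rinv_0_lt_compat, pow_lt; lra). lra. }
  assert (HCJ : 0 <= CJ).
  { unfold CJ. apply Rmult_le_pos; auto.
    assert (0 <= bmax ^ 2 * (L * (2 + bmax / (1 - Q) * exp (bmax / (1 - Q))) + bmax * (exp (bmax / (1 - Q)) + 1)) / (1 - Q)).
    { apply Rdiv_le_0_compat; [|lra]. apply Rmult_le_pos. apply pow2_ge_0.
      assert (0 <= bmax / (1 - Q)) by (apply Rdiv_le_0_compat; lra). pose proof (exp_pos (bmax / (1 - Q))).
      assert (0 <= bmax / (1 - Q) * exp (bmax / (1 - Q))) by (apply Rmult_le_pos; lra).
      apply Rplus_le_le_0_compat; apply Rmult_le_pos; lra. }
    lra. }
  destruct (INR_archimed 1 (L / ((1 - Q) * gam) + bmax / (Q * (bmin - beta)) + 1)) as [N0 HN0]. lra.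
  rewrite Rmult_1_r in HN0.
  exists N0, (Cf + Cc + CJ).
  intros eps N J u Heps HN HNN0 HJ Hxi Hsol x mu t.
  assert (HNr : INR N0 <= INR N) by (apply le_INR; lia).
  assert (Hn1 : 1 <= INR N) by (apply (le_INR 1); lia).
  set (n := INR N) in *.
  assert (HA1 : 0 <= L / ((1 - Q) * gam)) by (apply Rdiv_le_0_compat; [lra|apply Rmult_lt_0_compat; lra]).
  assert (HA2 : 0 <= bmax / (Q * (bmin - beta))) by (apply Rdiv_le_0_compat; [lra|apply Rmult_lt_0_compat; lra]).
  assert (Hn0 : 0 < n) by lra.
  set (l := ln (/ eps)).
  assert (Hl : 0 < l).
  { unfold l. rewrite <- ln_1. apply ln_increasing. lra.
    rewrite <- Rinv_1. apply Rinv_lt_contravar; lra. }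
  assert (Hlne : ln eps = - l) by (unfold l; rewrite ln_Rinv by lra; ring).
  set (xi := xi_mesh eps a beta (/ eps)) in *.
  assert (Hxiv : xi = a * eps / beta * l) by reflexivity.
  assert (Hxi0 : 0 < xi).
  { rewrite Hxiv. apply Rmult_lt_0_compat; auto. apply Rdiv_lt_0_compat; [|lra]. apply Rmult_lt_0_compat; lra. }
  assert (HJ1 : (1 <= J)%nat).
  { destruct J. simpl in HJ. nra. lia. }
  assert (HJr : 1 <= INR J) by (apply (le_INR 1); lia).
  assert (HNJ : n - INR J = (1 - Q) * n) by (rewrite HJ; ring).
  assert (HNJ0 : 0 < n - INR J) by (rewrite HNJ; apply Rmult_lt_0_compat; lra).
  assert (HJN : (J < N)%nat) by (apply INR_lt; fold n; lra).
  set (h := xi / INR J).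
  set (H := (1 - xi) / (n - INR J)).
  assert (Hh0 : 0 < h) by (unfold h; apply Rdiv_lt_0_compat; lra).
  assert (HhJ : h * INR J = xi) by (unfold h; field; lra).
  assert (Hhn : h <= / n).
  { unfold h. rewrite HJ. apply divR_le. apply Rmult_lt_0_compat; lra.
    replace (/ n * (Q * n)) with Q by (field; lra). lra. }
  assert (HHn : / n <= H <= / ((1 - Q) * n)).
  { unfold H. rewrite HNJ. split.
    - apply le_divR. apply Rmult_lt_0_compat; lra. replace (/ n * ((1 - Q) * n)) with (1 - Q) by (field; lra). lra.
    - apply divR_le. apply Rmult_lt_0_compat; lra. replace (/ ((1 - Q) * n) * ((1 - Q) * n)) with 1 by (field; lra). lra. }
  assert (Hhh : h <= H).
  { unfold h, H. rewrite HNJ, HJ. apply divR_le. apply Rmult_lt_0_compat; lra.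
    replace ((1 - xi) / ((1 - Q) * n) * (Q * n)) with ((1 - xi) * Q / (1 - Q)) by (field; lra).
    apply le_divR. lra. nra. }
  assert (HLH : L * H <= gam).
  { apply Rle_trans with (L * / ((1 - Q) * n)). apply Rmult_le_compat_l; lra.
    assert (L / ((1 - Q) * gam) <= n) by lra.
    replace (L * / ((1 - Q) * n)) with (L / ((1 - Q) * n)) by (unfold Rdiv; ring).
    apply divR_le. apply Rmult_lt_0_compat; lra.
    assert (L <= n * ((1 - Q) * gam)).
    { apply Rle_trans with (L / ((1 - Q) * gam) * ((1 - Q) * gam)). right; field; lra.
      apply Rmult_le_compat_r; [apply Rmult_le_pos; lra|lra]. }
    nra. }
  assert (HLh : L * h <= gam) by (apply Rle_trans with (L * H); [apply Rmult_le_compat_l|]; lra).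
  assert (HJb : beta <= b0 * (1 - / INR J)).
  { assert (bmax / (bmin - beta) <= INR J).
    { rewrite HJ. apply Rle_trans with (Q * (bmax / (Q * (bmin - beta)))).
      right. field. split; lra. apply Rmult_le_compat_l; lra. }
    assert (b0 / INR J <= bmin - beta).
    { apply divR_le. lra. apply Rle_trans with bmax. lra.
      apply Rle_trans with (bmax / (bmin - beta) * (bmin - beta)). right; field; lra.
      rewrite (Rmult_comm (bmin - beta)). apply Rmult_le_compat_r; lra. }
    match goal with Hx : b0 / INR J <= _ |- _ => unfold Rdiv in Hx end. lra. }
  set (K0 := - (eps * Derive u 0 / b 0)).
  assert (HK0 : Rabs K0 <= KK).
  { unfold K0, KK. rewrite Rabs_Ropp. unfold Rdiv. rewrite Rabs_mult, Rabs_Rinv by (fold b0; lra).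
    rewrite (Rabs_pos_eq (b 0)) by (fold b0; lra). fold b0.
    specialize (HKb eps u Heps Hsol). apply Rle_trans with (CK * / b0).
    apply Rmult_le_compat_r; [left; apply Rinv_0_lt_compat; lra|auto].
    apply Rmult_le_compat_l; auto. apply Rinv_le_contravar; lra. }
  set (R2 := Rpower eps (a - 2)).
  assert (HR2 : 0 < R2) by (unfold R2, Rpower; apply exp_pos).
  assert (HR2e : exp (- beta * xi / eps) = R2 * eps ^ 2).
  { unfold R2. rewrite <- (Rpower_pow 2 eps) by lra. rewrite <- Rpower_plus. unfold Rpower.
    f_equal. rewrite Hlne, Hxiv. simpl. field. lra. }
  assert (HE1 : exp (- b0 * xi / eps) <= R2 * eps ^ 2).
  { rewrite <- HR2e. apply exp_le_inv_le. unfold Rdiv. apply Rmult_le_compat_r.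
    left; apply Rinv_0_lt_compat; lra. nra. }
  assert (HEG : exp (- b0 * xi / eps) * exp (b0 * h / eps) <= R2 * eps ^ 2).
  { rewrite <- HR2e, <- exp_plus. apply exp_le_inv_le.
    assert (Hxh : xi - h = xi * (1 - / INR J)) by (unfold h; field; lra).
    assert (beta * xi <= b0 * (xi - h)) by (rewrite Hxh; nra).
    apply Rmult_le_reg_r with eps. lra.
    replace ((- b0 * xi / eps + b0 * h / eps) * eps) with (- (b0 * (xi - h))) by (field; lra).
    replace (- beta * xi / eps * eps) with (- (beta * xi)) by (field; lra). lra. }
  assert (Hxi1 : 0 <= xi <= 1) by lra.
  assert (HEl : b0 / eps * Rabs (b xi - b0) * exp (- b0 * xi / eps) <= Cl * (R2 * eps ^ 2)).
  { assert (Hd : Rabs (b xi - b0) <= L * xi) by (apply HLb; auto).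
    assert (HEx : exp (- b0 * xi / eps) = R2 * eps ^ 2 * exp (- ((b0 / beta - 1) * a) * l)).
    { rewrite <- HR2e, <- exp_plus. f_equal. rewrite Hxiv. field. lra. }
    assert (Hkk : kap <= (b0 / beta - 1) * a).
    { unfold kap. apply Rmult_le_compat_r; [lra|]. unfold Rdiv.
      assert (bmin * / beta <= b0 * / beta) by (apply Rmult_le_compat_r; [left; apply Rinv_0_lt_compat|]; lra). lra. }
    assert (Hel : l * exp (- ((b0 / beta - 1) * a) * l) <= / kap).
    { apply Rle_trans with (l * exp (- kap * l)).
      apply Rmult_le_compat_l; [lra|]. apply exp_le_inv_le. nra. apply pe_lin; lra. }
    apply Rle_trans with (b0 / eps * (L * xi) * exp (- b0 * xi / eps)).
    apply Rmult_le_compat_r; [left; apply exp_pos|]. apply Rmult_le_compat_l; auto. apply Rdiv_le_0_compat; lra.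
    rewrite HEx.
    replace (b0 / eps * (L * xi) * (R2 * eps ^ 2 * exp (- ((b0 / beta - 1) * a) * l)))
      with (b0 * L * (a / beta) * (R2 * eps ^ 2) * (l * exp (- ((b0 / beta - 1) * a) * l))) by (rewrite Hxiv; field; lra).
    unfold Cl. replace (bmax * L * (a / beta) * / kap * (R2 * eps ^ 2)) with (bmax * L * (a / beta) * (R2 * eps ^ 2) * / kap) by ring.
    assert (0 <= a / beta) by (apply Rdiv_le_0_compat; lra).
    assert (0 <= R2 * eps^2) by (apply Rmult_le_pos; [lra|apply pow2_ge_0]).
    apply Rmult_le_compat; auto.
    apply Rmult_le_pos; auto. apply Rmult_le_pos; auto. apply Rmult_le_pos; auto. lra.
    apply Rmult_le_pos; [lra|left; apply exp_pos].
    apply Rmult_le_compat_r; auto. apply Rmult_le_compat_r; auto. apply Rmult_le_compat_r; auto. lra. }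
  assert (Hbpos : forall y, 0 <= y <= 1 -> 0 < b y) by (intros y Hy; pose proof (Hbx y Hy); lra).
  assert (Hb00 : 0 < b 0) by (fold b0; lra).
  assert (HCsum1 : Cf <= Cf + Cc + CJ) by lra.
  assert (HCsum2 : Cc <= Cf + Cc + CJ) by lra.
  assert (HCsum3 : CJ <= Cf + Cc + CJ) by lra.
  split; [|split].
  -
    intros i [Hi1 Hi2].
    assert (Xm : mesh eps a beta (/ eps) N J (i - 1) = INR (i - 1) * h) by (rewrite mesh_lo by lia; reflexivity).
    assert (Xi : mesh eps a beta (/ eps) N J i = INR i * h) by (rewrite mesh_lo by lia; reflexivity).
    assert (Xp : mesh eps a beta (/ eps) N J (S i) = INR (S i) * h) by (rewrite mesh_lo by lia; reflexivity).
    assert (HiR : 1 <= INR i) by (apply (le_INR 1); lia).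
    assert (HiJ : INR i <= INR J) by (apply le_INR; lia).
    assert (Hp : INR i * h - INR (i - 1) * h = h) by (rewrite minus_INR by lia; simpl; ring).
    assert (Hq : INR (S i) * h - INR i * h = h) by (rewrite S_INR; ring).
    assert (Hxr : h <= INR i * h <= xi).
    { split. nra. rewrite <- HhJ. rewrite (Rmult_comm h). apply Rmult_le_compat_r; lra. }
    unfold t. rewrite tau_node by (try lia; try lra; rewrite ?Xm, ?Xi, ?Xp; try lra; apply Hbpos; lra).
    rewrite Xm, Xi, Xp, Hp, Hq. fold b0 K0.
    unfold x. rewrite Xi. rewrite Hlne.
    replace ((- l) ^ 2) with (l ^ 2) by ring.
    apply Rle_trans with (Cf * (l ^ 2 * / n ^ 2 * exp (- beta * (INR i * h) / eps))).
    + assert (F4 : 0 < b (INR i * h) <= bmax) by (split; [apply Hbpos|apply Hbx]; lra).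
      assert (F6 : Rabs (b (INR i * h) - b0) <= L * (INR i * h)) by (apply HLb; lra).
      assert (F15 : h / eps = a * l / (beta * Q * n)).
      { unfold h. rewrite HJ, Hxiv. field. repeat split; lra. }
      exact (fine_bound eps l h (INR i * h) b0 (b (INR i * h)) L bmax bmin beta gam K0 KK a Q n
        ltac:(lra) ltac:(lra) ltac:(lra) F4 HL F6 ltac:(lra) eq_refl Hbmin HLh HK0 Hn0 Hbeta ltac:(lra) F15).
    + apply Rmult_le_compat_r; [|lra].
      apply Rmult_le_pos; [|left; apply exp_pos]. apply Rmult_le_pos; [apply pow2_ge_0|].
      left; apply Rinv_0_lt_compat, pow_lt; lra.
  -
    assert (Xm : mesh eps a beta (/ eps) N J (J - 1) = INR (J - 1) * h) by (rewrite mesh_lo by lia; reflexivity).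
    assert (XJ : mesh eps a beta (/ eps) N J J = xi) by (rewrite mesh_lo by lia; fold xi; field; lra).
    assert (Xp : mesh eps a beta (/ eps) N J (S J) = xi + H).
    { rewrite mesh_hi by (try lia; lra). fold xi. rewrite S_INR. fold n. unfold H. ring. }
    assert (Hp : xi - INR (J - 1) * h = h) by (rewrite minus_INR by lia; simpl; lra).
    assert (Hq : xi + H - xi = H) by ring.
    unfold t. rewrite tau_node by (try lia; try lra; rewrite ?Xm, ?XJ, ?Xp; try lra; apply Hbpos; lra).
    rewrite Xm, XJ, Xp, Hp, Hq. fold b0 K0.
    unfold mu. fold R2.
    assert (F4 : 0 < b xi <= bmax) by (split; [apply Hbpos|apply Hbx]; lra).
    assert (F6 : Rabs (b xi - b0) <= L).
    { apply Rle_trans with (L * xi). apply HLb; lra. assert (L * xi <= L * 1) by (apply Rmult_le_compat_l; lra). lra. }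
    apply Rle_trans with (CJ * (R2 * Rmin (eps ^ 2) (/ n ^ 2) * n)).
    + exact (J_bound eps h H xi b0 (b xi) L bmax K0 KK Q n R2 Cl
        ltac:(lra) ltac:(lra) ltac:(lra) F4 HL HCl HK0 Hn1 HHn ltac:(lra) HR2 HE1 HEG HEl F6).
    + apply Rmult_le_compat_r; [|lra].
      apply Rmult_le_pos; [|lra]. apply Rmult_le_pos; [lra|].
      unfold Rmin. destruct (Rle_dec (eps ^ 2) (/ n ^ 2)). apply pow2_ge_0. left; apply Rinv_0_lt_compat, pow_lt; lra.
  -
    intros i [Hi1 Hi2].
    assert (HJ0 : INR J <> 0) by lra.
    assert (Xm : mesh eps a beta (/ eps) N J (i - 1) = xi + (INR (i - 1) - INR J) * H) by (rewrite mesh_hi by (auto; lia); reflexivity).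
    assert (Xi : mesh eps a beta (/ eps) N J i = xi + (INR i - INR J) * H) by (rewrite mesh_hi by (auto; lia); reflexivity).
    assert (Xp : mesh eps a beta (/ eps) N J (S i) = xi + (INR (S i) - INR J) * H) by (rewrite mesh_hi by (auto; lia); reflexivity).
    assert (HiJ : INR J + 1 <= INR i).
    { rewrite <- S_INR. apply le_INR. lia. }
    assert (HiN : INR i <= n - 1).
    { assert (INR i <= INR (N - 1)) by (apply le_INR; lia). rewrite minus_INR in H0 by lia. simpl in H0. fold n in H0. lra. }
    assert (Hp : xi + (INR i - INR J) * H - (xi + (INR (i - 1) - INR J) * H) = H) by (rewrite minus_INR by lia; simpl; ring).
    assert (Hq : xi + (INR (S i) - INR J) * H - (xi + (INR i - INR J) * H) = H) by (rewrite S_INR; ring).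
    assert (HH0 : 0 < H) by (pose proof (Rinv_0_lt_compat n Hn0); lra).
    assert (HHx : H * (n - INR J) = 1 - xi) by (unfold H; field; lra).
    assert (Hxr : xi + H <= xi + (INR i - INR J) * H <= 1).
    { split. assert (H * 1 <= (INR i - INR J) * H) by (rewrite Rmult_comm; apply Rmult_le_compat_r; lra). lra.
      assert ((INR i - INR J) * H <= (n - INR J) * H) by (apply Rmult_le_compat_r; lra). lra. }
    unfold t. rewrite tau_node by (try lia; try lra; rewrite ?Xm, ?Xi, ?Xp; try lra; apply Hbpos; lra).
    rewrite Xm, Xi, Xp, Hp, Hq. fold b0 K0.
    unfold mu. fold R2.
    set (xx := xi + (INR i - INR J) * H) in *.
    assert (F4 : 0 < b xx <= bmax) by (split; [apply Hbpos|apply Hbx]; lra).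
    assert (F6 : Rabs (b xx - b0) <= L * xx) by (apply HLb; lra).
    apply Rle_trans with (Cc * (R2 * Rmin (eps ^ 2) (/ n ^ 2))).
    + exact (coarse_bound eps H xx xi b0 (b xx) L bmax bmin beta gam K0 KK Q n R2
        ltac:(lra) HH0 ltac:(lra) ltac:(lra) ltac:(lra) F4 HL F6 ltac:(lra) eq_refl Hbmin HLH HK0 Hn0 ltac:(lra) ltac:(lra) HR2e HR2 Hbeta).
    + apply Rmult_le_compat_r; [|lra].
      apply Rmult_le_pos; [lra|].
      unfold Rmin. destruct (Rle_dec (eps ^ 2) (/ n ^ 2)). apply pow2_ge_0. left; apply Rinv_0_lt_compat, pow_lt; lra.
Qed.
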